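(* In the resource theory of unital maps on a $d$-dimensional Hilbert space, with the currency $\mathcal C=\{C^k\}_{k=1}^d\cup\{\Omega\}$, $C^k=\{\Pi^k/k\}$, $\mathrm{Val}(C^k)=\log d-\log k$, $\mathrm{Val}(\Omega)=0$, for every density operator $\rho$ and every $0\le\varepsilon\le1$, $$\mathrm{Cost}(\mathcal B^\varepsilon(\rho))=\log d-\sup_{\sigma\in\mathcal B^\varepsilon(\rho)}\log\big\lfloor 2^{H_{\min}(\sigma)}\big\rfloor=\log d-\log\big\lfloor 2^{H_{\min}^\varepsilon(\rho)}\big\rfloor.$$
   Context: $\Omega$ is the set of density operators on a Hilbert space of dimension $d$ with fixed orthonormal basis; $\Pi^k$ is the projector onto the first $k$ basis vectors. Allowed transformations: $f_{\mathcal E}(V)=\{\mathcal E(\rho):\rho\in V\}$ for unital CPTP maps $\mathcal E$; $V\to W$ iff some such $\mathcal E$ maps every element of $V$ into $W$. $\mathrm{Cost}(V)=\inf\{\mathrm{Val}(C):C\in\mathcal C,\ C\to V\}$. $\mathcal B^\varepsilon(\rho)=\{\sigma\in\Omega: D(\sigma,\rho)\le\varepsilon\}$ is the closed $\varepsilon$-ball around $\rho$ with respect to a fixed continuous metric $D$ on density operators (e.g. trace distance). $H_{\min}(\sigma)=-\log\lambda_{\max}(\sigma)$ ($\lambda_{\max}$ the largest eigenvalue) and $H^\varepsilon_{\min}(\rho)=\sup_{\sigma\in\mathcal B^\varepsilon(\rho)}H_{\min}(\sigma)$; $\lfloor\cdot\rfloor$ is the floor; logarithms base 2. *)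

(* Defs.v *)
From Stdlib Require Import Reals Lra Lia Arith.
Open Scope R_scope.

Record C := mkC { re : R; im : R }.
Definition C0 : C := mkC 0 0.
Definition C1 : C := mkC 1 0.
Definition RtoC (r : R) : C := mkC r 0.
Definition Cadd (x y : C) : C := mkC (re x + re y) (im x + im y).
Definition Copp (x : C) : C := mkC (- re x) (- im x).
Definition Csub (x y : C) : C := Cadd x (Copp y).
Definition Cmul (x y : C) : C :=
  mkC (re x * re y - im x * im y) (re x * im y + im x * re y).
Definition Cconj (x : C) : C := mkC (re x) (- im x).
Definition Cmod (x : C) : R := sqrt (re x * re x + im x * im x).

Fixpoint Csum (n : nat) (f : nat -> C) : C :=
  match n with O => C0 | S n' => Cadd (Csum n' f) (f n') end.
Fixpoint Rsum (n : nat) (f : nat -> R) : R :=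
  match n with O => 0 | S n' => Rsum n' f + f n' end.

(* ---------- Matrices: entries indexed by nat; an m x m matrix uses indices < m ---------- *)
Definition Mat := nat -> nat -> C.
Definition Vec := nat -> C.

Definition supported (m : nat) (A : Mat) : Prop :=
  forall i j, (m <= i)%nat \/ (m <= j)%nat -> A i j = C0.
Definition Hermitian (m : nat) (A : Mat) : Prop :=
  forall i j, (i < m)%nat -> (j < m)%nat -> A i j = Cconj (A j i).
Definition quad (m : nat) (A : Mat) (v : Vec) : C :=
  Csum m (fun i => Csum m (fun j => Cmul (Cconj (v i)) (Cmul (A i j) (v j)))).
Definition PSD (m : nat) (A : Mat) : Prop :=
  Hermitian m A /\ forall v : Vec, im (quad m A v) = 0 /\ 0 <= re (quad m A v).
Definition trace (m : nat) (A : Mat) : C := Csum m (fun i => A i i).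

Definition Density (d : nat) (A : Mat) : Prop :=
  supported d A /\ PSD d A /\ trace d A = C1.

Definition Idm (d : nat) : Mat :=
  fun i j => if (Nat.ltb i d && Nat.eqb i j)%bool then C1 else C0.
Definition PiK (k : nat) : Mat :=
  fun i j => if (Nat.ltb i k && Nat.eqb i j)%bool then RtoC (/ INR k) else C0.

(* E(X)_{ij} = sum_{k,l<d} S i j k l * X_{kl}; every linear map M_d -> M_d has this form *)
Definition Superop := nat -> nat -> nat -> nat -> C.
Definition applyS (d : nat) (S : Superop) (X : Mat) : Mat :=
  fun i j => if (Nat.ltb i d && Nat.ltb j d)%bool
             then Csum d (fun k => Csum d (fun l => Cmul (S i j k l) (X k l)))
             else C0.
(* id_n (x) E acting on an (n*d) x (n*d) matrix, index p = a*d + i *)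
Definition ampl (n d : nat) (S : Superop) (X : Mat) : Mat :=
  fun p q =>
    if (Nat.ltb p (n * d) && Nat.ltb q (n * d))%bool then
      applyS d S (fun k l => X (p / d * d + k)%nat (q / d * d + l)%nat)
             (p mod d) (q mod d)
    else C0.
Definition CP (d : nat) (S : Superop) : Prop :=
  forall (n : nat) (X : Mat), supported (n * d) X -> PSD (n * d) X ->
    PSD (n * d) (ampl n d S X).
Definition TP (d : nat) (S : Superop) : Prop :=
  forall X : Mat, trace d (applyS d S X) = trace d X.
Definition Unital (d : nat) (S : Superop) : Prop :=
  forall i j, applyS d S (Idm d) i j = Idm d i j.
Definition UnitalChannel (d : nat) (S : Superop) : Prop :=
  CP d S /\ TP d S /\ Unital d S.

Definition Conv (d : nat) (V W : Mat -> Prop) : Prop :=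
  exists S, UnitalChannel d S /\ forall rho, V rho -> W (applyS d S rho).

Definition log2 (x : R) : R := ln x / ln 2.
(* floor: Int_part r = up r - 1 is the largest integer <= r *)
Definition floorR (x : R) : R := IZR (Int_part x).
Definition IsSup (P : R -> Prop) (s : R) : Prop :=
  (forall x, P x -> x <= s) /\ (forall b, (forall x, P x -> x <= b) -> s <= b).
Definition IsInf (P : R -> Prop) (s : R) : Prop :=
  (forall x, P x -> s <= x) /\ (forall b, (forall x, P x -> b <= x) -> b <= s).

Inductive coin := CoinK (k : nat) | CoinOmega.
Definition InCurrency (d : nat) (c : coin) : Prop :=
  match c with CoinK k => (1 <= k <= d)%nat | CoinOmega => True end.
Definition coinSet (d : nat) (c : coin) : Mat -> Prop :=
  match c with
  | CoinK k => fun A => A = PiK k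
  | CoinOmega => Density d
  end.
Definition Val (d : nat) (c : coin) : R :=
  match c with
  | CoinK k => log2 (INR d) - log2 (INR k)
  | CoinOmega => 0
  end.
Definition IsCost (d : nat) (V : Mat -> Prop) (x : R) : Prop :=
  IsInf (fun v => exists c, InCurrency d c /\ Conv d (coinSet d c) V /\ v = Val d c) x.

Definition IsEig (d : nat) (A : Mat) (l : R) : Prop :=
  exists v : Vec, (exists i, (i < d)%nat /\ v i <> C0) /\
    forall i, (i < d)%nat -> Csum d (fun j => Cmul (A i j) (v j)) = Cmul (RtoC l) (v i).
Definition LambdaMax (d : nat) (A : Mat) (l : R) : Prop :=
  IsEig d A l /\ forall m, IsEig d A m -> m <= l.
Definition Hmin (d : nat) (A : Mat) (h : R) : Prop :=
  exists l, LambdaMax d A l /\ h = - log2 l.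

Definition mdist (d : nat) (A B : Mat) : R :=
  Rsum d (fun i => Rsum d (fun j => Cmod (Csub (A i j) (B i j)))).
Definition IsMetricOn (d : nat) (D : Mat -> Mat -> R) : Prop :=
  forall x y z, Density d x -> Density d y -> Density d z ->
    0 <= D x y /\ (D x y = 0 <-> x = y) /\ D x y = D y x /\ D x z <= D x y + D y z.
Definition ContinuousOn (d : nat) (D : Mat -> Mat -> R) : Prop :=
  forall x y, Density d x -> Density d y -> forall e, 0 < e -> exists delta, 0 < delta /\
    forall x' y', Density d x' -> Density d y' ->
      mdist d x x' < delta -> mdist d y y' < delta -> Rabs (D x y - D x' y') < e.
Definition Ball (d : nat) (D : Mat -> Mat -> R) (eps : R) (rho : Mat) : Mat -> Prop :=
  fun sigma => Density d sigma /\ D sigma rho <= eps.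

(* Main.v *)
Require Import Defs.
From Stdlib Require Import Reals.
From Stdlib Require Import Lra Lia Arith Ring Field ClassicalEpsilon FunctionalExtensionality List Classical ZArith.
Open Scope R_scope.
Import Defs.

Lemma C_ext : forall x y : C, re x = re y -> im x = im y -> x = y.
Proof. intros [a b] [c e]; simpl; intros -> ->; reflexivity. Qed.

Ltac Csolve := apply C_ext; simpl; ring.

Lemma Cring_th : ring_theory C0 C1 Cadd Cmul Csub Copp (@eq C).
Proof. constructor; intros; unfold Csub; Csolve. Qed.
Add Ring Cring : Cring_th.

Lemma Cconj_add x y : Cconj (Cadd x y) = Cadd (Cconj x) (Cconj y). Proof. Csolve. Qed.
Lemma Cconj_mul x y : Cconj (Cmul x y) = Cmul (Cconj x) (Cconj y). Proof. Csolve. Qed.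
Lemma Cconj_opp x : Cconj (Copp x) = Copp (Cconj x). Proof. Csolve. Qed.
Lemma Cconj_sub x y : Cconj (Csub x y) = Csub (Cconj x) (Cconj y). Proof. Csolve. Qed.
Lemma Cconj_conj x : Cconj (Cconj x) = x. Proof. Csolve. Qed.
Lemma Cconj_0 : Cconj C0 = C0. Proof. Csolve. Qed.
Lemma Cconj_1 : Cconj C1 = C1. Proof. Csolve. Qed.
Lemma Cconj_R r : Cconj (RtoC r) = RtoC r. Proof. Csolve. Qed.
Lemma RtoC_mul a b : RtoC (a * b) = Cmul (RtoC a) (RtoC b). Proof. Csolve. Qed.
Lemma RtoC_add a b : RtoC (a + b) = Cadd (RtoC a) (RtoC b). Proof. Csolve. Qed.
Lemma RtoC_opp a : RtoC (- a) = Copp (RtoC a). Proof. Csolve. Qed.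
Lemma RtoC_0 : RtoC 0 = C0. Proof. reflexivity. Qed.
Lemma RtoC_1 : RtoC 1 = C1. Proof. reflexivity. Qed.
Lemma re_mul_conj x : re (Cmul (Cconj x) x) = re x * re x + im x * im x.
Proof. destruct x; simpl; ring. Qed.
Lemma im_mul_conj x : im (Cmul (Cconj x) x) = 0.
Proof. destruct x; simpl; ring. Qed.
Lemma Cnorm_nonneg x : 0 <= re x * re x + im x * im x.
Proof. nra. Qed.
Lemma Cnorm_zero x : re x * re x + im x * im x = 0 -> x = C0.
Proof. destruct x as [a b]; simpl; intro H; apply C_ext; simpl; nra. Qed.

Lemma Csum_ext n f g : (forall i, (i < n)%nat -> f i = g i) -> Csum n f = Csum n g.
Proof. induction n; simpl; intros H; auto. rewrite IHn by (intros; apply H; lia). rewrite H by lia; auto. Qed.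
Lemma Rsum_ext n f g : (forall i, (i < n)%nat -> f i = g i) -> Rsum n f = Rsum n g.
Proof. induction n; simpl; intros H; auto. rewrite IHn by (intros; apply H; lia). rewrite H by lia; auto. Qed.
Lemma re_Csum n f : re (Csum n f) = Rsum n (fun i => re (f i)).
Proof. induction n; simpl; auto. rewrite IHn; auto. Qed.
Lemma im_Csum n f : im (Csum n f) = Rsum n (fun i => im (f i)).
Proof. induction n; simpl; auto. rewrite IHn; auto. Qed.
Lemma Csum_add n f g : Csum n (fun i => Cadd (f i) (g i)) = Cadd (Csum n f) (Csum n g).
Proof. induction n; simpl. Csolve. rewrite IHn; ring. Qed.
Lemma Csum_sub n f g : Csum n (fun i => Csub (f i) (g i)) = Csub (Csum n f) (Csum n g).
Proof. induction n; simpl. Csolve. rewrite IHn; ring. Qed.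
Lemma Csum_mul_l n c f : Csum n (fun i => Cmul c (f i)) = Cmul c (Csum n f).
Proof. induction n; simpl. Csolve. rewrite IHn; ring. Qed.
Lemma Csum_mul_r n c f : Csum n (fun i => Cmul (f i) c) = Cmul (Csum n f) c.
Proof. induction n; simpl. Csolve. rewrite IHn; ring. Qed.
Lemma Csum_0 n : Csum n (fun _ => C0) = C0.
Proof. induction n; simpl; auto. rewrite IHn; ring. Qed.
Lemma Csum_0' n f : (forall i, (i < n)%nat -> f i = C0) -> Csum n f = C0.
Proof. intros H; rewrite (Csum_ext n f (fun _ => C0)) by auto; apply Csum_0. Qed.
Lemma Cconj_Csum n f : Cconj (Csum n f) = Csum n (fun i => Cconj (f i)).
Proof. induction n; simpl. Csolve. rewrite Cconj_add, IHn; auto. Qed.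
Lemma Csum_swap n m f : Csum n (fun i => Csum m (fun j => f i j)) = Csum m (fun j => Csum n (fun i => f i j)).
Proof. induction n; simpl. rewrite Csum_0; auto. rewrite IHn, Csum_add; auto. Qed.
Lemma Csum_delta n j f : (j < n)%nat -> Csum n (fun i => if Nat.eqb i j then f i else C0) = f j.
Proof.
  induction n; intros Hj; [lia|]. simpl. destruct (Nat.eq_dec j n) as [->|Hne].
  - rewrite Nat.eqb_refl. rewrite Csum_0'. ring. intros i Hi. destruct (Nat.eqb_spec i n); [lia|auto].
  - rewrite IHn by lia. destruct (Nat.eqb_spec n j); [lia|ring].
Qed.
Lemma Csum_delta' n j f : (j < n)%nat -> Csum n (fun i => if Nat.eqb j i then f i else C0) = f j.
Proof. intros H; rewrite <- (Csum_delta n j f H); apply Csum_ext; intros i _. rewrite Nat.eqb_sym; auto. Qed.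
Lemma Csum_split n m f : Csum (n + m) f = Cadd (Csum n f) (Csum m (fun i => f (n + i)%nat)).
Proof. induction m; simpl. rewrite Nat.add_0_r; ring. rewrite Nat.add_succ_r; simpl; rewrite IHm; ring. Qed.
Lemma Csum_flat n d f : Csum (n * d) f = Csum n (fun c => Csum d (fun i => f (c * d + i)%nat)).
Proof. induction n; simpl; auto. replace (d + n * d)%nat with (n * d + d)%nat by lia.
  rewrite Csum_split, IHn; auto. Qed.
Lemma Rsum_le n f g : (forall i, (i < n)%nat -> f i <= g i) -> Rsum n f <= Rsum n g.
Proof. induction n; simpl; intros H. lra. assert (H1 := H n (Nat.lt_succ_diag_r n)). assert (Rsum n f <= Rsum n g) by (apply IHn; intros; apply H; lia). lra. Qed.
Lemma Rsum_0 n : Rsum n (fun _ => 0) = 0.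
Proof. induction n; simpl; auto. rewrite IHn; ring. Qed.
Lemma Rsum_nonneg n f : (forall i, (i < n)%nat -> 0 <= f i) -> 0 <= Rsum n f.
Proof. intros H; rewrite <- (Rsum_0 n); apply Rsum_le; auto. Qed.
Lemma Rsum_add n f g : Rsum n (fun i => f i + g i) = Rsum n f + Rsum n g.
Proof. induction n; simpl. ring. rewrite IHn; ring. Qed.
Lemma Rsum_scal n c f : Rsum n (fun i => c * f i) = c * Rsum n f.
Proof. induction n; simpl. ring. rewrite IHn; ring. Qed.
Lemma Rsum_zero_nonneg n f : (forall i, (i < n)%nat -> 0 <= f i) -> Rsum n f = 0 -> forall i, (i < n)%nat -> f i = 0.
Proof.
  induction n; intros H0 H i Hi; [lia|]. simpl in H.
  assert (0 <= Rsum n f) by (apply Rsum_nonneg; intros; apply H0; lia).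
  assert (0 <= f n) by (apply H0; lia).
  destruct (Nat.eq_dec i n) as [->|]. lra. apply IHn; [intros; apply H0; lia|lra|lia].
Qed.

Definition ip (n : nat) (u v : Vec) : C := Csum n (fun i => Cmul (Cconj (u i)) (v i)).
Definition mv (n : nat) (A : Mat) (v : Vec) : Vec := fun i => Csum n (fun j => Cmul (A i j) (v j)).
Definition nrm (n : nat) (v : Vec) : R := re (ip n v v).
Definition vlin (v : Vec) (c : C) (w : Vec) : Vec := fun i => Cadd (v i) (Cmul c (w i)).
Definition PSDw (n : nat) (A : Mat) : Prop := forall v, 0 <= re (quad n A v).

Lemma quad_ip n A v : quad n A v = ip n v (mv n A v).
Proof. unfold quad, ip, mv. apply Csum_ext; intros i _. rewrite Csum_mul_l; auto. Qed.
Lemma nrm_sum n v : nrm n v = Rsum n (fun i => re (v i) * re (v i) + im (v i) * im (v i)).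
Proof. unfold nrm, ip. rewrite re_Csum. apply Rsum_ext; intros; apply re_mul_conj. Qed.
Lemma nrm_nonneg n v : 0 <= nrm n v.
Proof. rewrite nrm_sum; apply Rsum_nonneg; intros; apply Cnorm_nonneg. Qed.
Lemma nrm_zero n v : nrm n v = 0 -> forall i, (i < n)%nat -> v i = C0.
Proof. rewrite nrm_sum; intros H i Hi. apply Cnorm_zero.
  apply (Rsum_zero_nonneg n (fun i => re (v i) * re (v i) + im (v i) * im (v i))); auto.
  intros; apply Cnorm_nonneg. Qed.
Lemma ip_conj n u v : Cconj (ip n u v) = ip n v u.
Proof. unfold ip; rewrite Cconj_Csum; apply Csum_ext; intros. rewrite Cconj_mul, Cconj_conj; ring. Qed.
Lemma im_ip_self n v : im (ip n v v) = 0.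
Proof. unfold ip; rewrite im_Csum. rewrite <- (Rsum_0 n). apply Rsum_ext; intros; apply im_mul_conj. Qed.
Lemma ip_self n v : ip n v v = RtoC (nrm n v).
Proof. apply C_ext; simpl; auto. apply im_ip_self. Qed.
Lemma ip_linr n u v c w : ip n u (vlin v c w) = Cadd (ip n u v) (Cmul c (ip n u w)).
Proof. unfold ip, vlin. rewrite <- Csum_mul_l, <- Csum_add. apply Csum_ext; intros; ring. Qed.
Lemma ip_linl n u v c w : ip n (vlin v c w) u = Cadd (ip n v u) (Cmul (Cconj c) (ip n w u)).
Proof. unfold ip, vlin. rewrite <- Csum_mul_l, <- Csum_add. apply Csum_ext; intros.
  rewrite Cconj_add, Cconj_mul; ring. Qed.
Lemma mv_lin n A v c w : mv n A (vlin v c w) = vlin (mv n A v) c (mv n A w).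
Proof. extensionality i. unfold mv, vlin. rewrite <- Csum_mul_l, <- Csum_add. apply Csum_ext; intros; ring. Qed.
Lemma ip_ext n u u' v v' : (forall i, (i < n)%nat -> u i = u' i) -> (forall i, (i < n)%nat -> v i = v' i) ->
  ip n u v = ip n u' v'.
Proof. intros H1 H2; unfold ip; apply Csum_ext; intros; rewrite H1, H2; auto. Qed.

Lemma herm_ip n A u v : Hermitian n A -> ip n u (mv n A v) = Cconj (ip n v (mv n A u)).
Proof.
  intros HA. unfold ip, mv. rewrite Cconj_Csum.
  transitivity (Csum n (fun i => Csum n (fun j => Cmul (Cconj (u i)) (Cmul (A i j) (v j))))).
  { apply Csum_ext; intros; rewrite Csum_mul_l; auto. }
  rewrite Csum_swap. apply Csum_ext; intros j Hj.
  rewrite Cconj_mul, Cconj_Csum, <- Csum_mul_l. apply Csum_ext; intros i Hi.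
  rewrite Cconj_mul, Cconj_conj, (HA i j Hi Hj). ring.
Qed.
Lemma herm_quad_real n A v : Hermitian n A -> im (quad n A v) = 0.
Proof. intros HA. rewrite quad_ip. pose proof (herm_ip n A v v HA) as H.
  apply (f_equal im) in H. simpl in H. lra. Qed.

Lemma quad_expand n A v t u : Hermitian n A ->
  re (quad n A (vlin v (RtoC t) u)) = re (quad n A v) + 2 * t * re (ip n u (mv n A v)) + t * t * re (quad n A u).
Proof.
  intros HA. rewrite !quad_ip, mv_lin, ip_linl, !ip_linr, Cconj_R.
  rewrite (herm_ip n A v u HA). destruct (ip n u (mv n A v)) as [a b], (ip n u (mv n A u)) as [c e].
  destruct (ip n v (mv n A v)). simpl. ring.
Qed.

Lemma psd_kernel n B v : Hermitian n B -> PSDw n B -> re (quad n B v) = 0 ->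
  forall i, (i < n)%nat -> mv n B v i = C0.
Proof.
  intros HB HP H0. set (u := mv n B v).
  assert (Hu : re (ip n u (mv n B v)) = nrm n u) by reflexivity.
  set (a := nrm n u). set (b := re (quad n B u)).
  assert (Hb : 0 <= b) by apply HP. assert (Ha : 0 <= a) by apply nrm_nonneg.
  assert (Ht := HP (vlin v (RtoC (- a / (b + 1))) u)). rewrite quad_expand in Ht by auto.
  rewrite H0, Hu in Ht. fold a b in Ht.
  assert (a = 0).
  { assert (Hq : 0 <= a * a * (- b - 2) / ((b + 1) * (b + 1))).
    { replace (a * a * (- b - 2) / ((b + 1) * (b + 1))) with
        (0 + 2 * (- a / (b + 1)) * a + - a / (b + 1) * (- a / (b + 1)) * b) by (field; lra). lra. }
    assert (0 < (b + 1) * (b + 1)) by nra.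
    assert (0 <= a * a * (- b - 2)).
    { apply Rmult_le_reg_r with (/ ((b + 1) * (b + 1))). apply Rinv_0_lt_compat; lra.
      rewrite Rmult_0_l; exact Hq. }
    nra. }
  apply nrm_zero; auto.
Qed.

Definition ev (i : nat) (x : C) : Vec := fun l => if Nat.eqb l i then x else C0.

Lemma Csum_ev n f i x : (i < n)%nat -> Csum n (fun l => Cmul (f l) (ev i x l)) = Cmul (f i) x.
Proof. intros Hi. rewrite <- (Csum_delta n i (fun l => Cmul (f l) x) Hi). apply Csum_ext; intros l _.
  unfold ev; destruct (Nat.eqb l i); ring. Qed.
Lemma ip_ev_l n i x w : (i < n)%nat -> ip n (ev i x) w = Cmul (Cconj x) (w i).
Proof. intros Hi. unfold ip. rewrite <- (Csum_delta n i (fun l => Cmul (Cconj x) (w l)) Hi). apply Csum_ext; intros l _.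
  unfold ev; destruct (Nat.eqb l i); [auto|rewrite Cconj_0; ring]. Qed.
Lemma mv_ev n A i x : (i < n)%nat -> mv n A (ev i x) = fun k => Cmul (A k i) x.
Proof. intros Hi; extensionality k; unfold mv; apply Csum_ev; auto. Qed.

Definition two (i : nat) (x : C) (j : nat) (y : C) : Vec := fun l => Cadd (ev i x l) (ev j y l).

Lemma quad_two n A i x j y : (i < n)%nat -> (j < n)%nat ->
  quad n A (two i x j y) = Cadd (Cadd (Cmul (Cconj x) (Cmul (A i i) x)) (Cmul (Cconj x) (Cmul (A i j) y)))
                                (Cadd (Cmul (Cconj y) (Cmul (A j i) x)) (Cmul (Cconj y) (Cmul (A j j) y))).
Proof.
  intros Hi Hj. rewrite quad_ip.
  assert (Hm : mv n A (two i x j y) = fun k => Cadd (Cmul (A k i) x) (Cmul (A k j) y)).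
  { extensionality k. unfold mv, two. rewrite <- (Csum_ev n (A k) i x Hi), <- (Csum_ev n (A k) j y Hj).
    rewrite <- Csum_add. apply Csum_ext; intros; ring. }
  rewrite Hm. unfold two. unfold ip.
  transitivity (Cadd (ip n (ev i x) (fun k => Cadd (Cmul (A k i) x) (Cmul (A k j) y)))
                     (ip n (ev j y) (fun k => Cadd (Cmul (A k i) x) (Cmul (A k j) y)))).
  { unfold ip. rewrite <- Csum_add. apply Csum_ext; intros. rewrite Cconj_add; ring. }
  rewrite !ip_ev_l by auto. ring.
Qed.

Lemma quad_ev n A i x : (i < n)%nat -> quad n A (ev i x) = Cmul (Cconj x) (Cmul (A i i) x).
Proof. intros Hi. rewrite quad_ip, mv_ev, ip_ev_l; auto. Qed.

Lemma quad_ext_v n A v w : (forall i, (i < n)%nat -> v i = w i) -> quad n A v = quad n A w.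
Proof. intros H; unfold quad; apply Csum_ext; intros i Hi; apply Csum_ext; intros j Hj. rewrite H, (H j); auto. Qed.

Lemma quad_Sm_zero m A v : (forall i, (i < S m)%nat -> A i m = C0 /\ A m i = C0) -> quad (S m) A v = quad m A v.
Proof.
  intros HZ. unfold quad. change (Csum (S m) ?f) with (Cadd (Csum m f) (f m)).
  rewrite (Csum_ext m (fun i => Csum (S m) _) (fun i => Csum m (fun j => Cmul (Cconj (v i)) (Cmul (A i j) (v j))))).
  - change (Csum (S m) ?f) with (Cadd (Csum m f) (f m)).
    rewrite (Csum_0' m (fun j => Cmul (Cconj (v m)) (Cmul (A m j) (v j)))). destruct (HZ m) as [H1 _]; [lia|]. rewrite H1; ring.
    intros j Hj. destruct (HZ j) as [_ H2]; [lia|]. rewrite H2; ring.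
  - intros i Hi. change (Csum (S m) ?f) with (Cadd (Csum m f) (f m)). destruct (HZ i) as [H1 _]; [lia|]. rewrite H1; ring.
Qed.

Lemma quad_sub_rank1 n A b v :
  quad n (fun i j => Csub (A i j) (Cmul (b i) (Cconj (b j)))) v = Csub (quad n A v) (Cmul (Cconj (ip n b v)) (ip n b v)).
Proof.
  unfold quad.
  assert (Hc : Cconj (ip n b v) = Csum n (fun i => Cmul (Cconj (v i)) (b i))).
  { unfold ip; rewrite Cconj_Csum; apply Csum_ext; intros; rewrite Cconj_mul, Cconj_conj; ring. }
  rewrite Hc, <- Csum_mul_r, <- Csum_sub. apply Csum_ext; intros i _.
  unfold ip. rewrite <- Csum_mul_l, <- Csum_sub. apply Csum_ext; intros; ring.
Qed.

Lemma herm_diag_real n A i : Hermitian n A -> (i < n)%nat -> im (A i i) = 0.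
Proof. intros H Hi. pose proof (H i i Hi Hi) as E. apply (f_equal im) in E. simpl in E. lra. Qed.
Lemma psd_diag n A i : PSDw n A -> (i < n)%nat -> 0 <= re (A i i).
Proof. intros H Hi. pose proof (H (ev i C1)) as E. rewrite quad_ev in E by auto.
  replace (re (Cmul (Cconj C1) (Cmul (A i i) C1))) with (re (A i i)) in E; auto.
  destruct (A i i); simpl; ring. Qed.

Lemma zero_pivot n A i m : Hermitian n A -> PSDw n A -> (i < n)%nat -> (m < n)%nat -> i <> m ->
  re (A m m) = 0 -> A i m = C0.
Proof.
  intros HH HP Hi Hm Him Hz.
  assert (Hmi : A m i = Cconj (A i m)) by (apply HH; auto).
  assert (Hmm : A m m = C0) by (apply C_ext; simpl; auto; eapply herm_diag_real; eauto).
  set (al := re (A i i)). assert (Hal : 0 <= al) by (apply (psd_diag n); auto).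
  set (t := / (al + 1)). assert (Ht : 0 < t) by (apply Rinv_0_lt_compat; lra).
  assert (Hta : t * al < 1).
  { unfold t. apply (Rmult_lt_reg_l (al + 1)); [lra|]. rewrite <- Rmult_assoc, Rinv_r by lra. lra. }
  pose proof (HP (two i (Cmul (RtoC (- t)) (A i m)) m C1)) as E.
  rewrite quad_two in E by auto. rewrite Hmi, Hmm in E.
  assert (Hai : A i i = RtoC al) by (apply C_ext; simpl; auto; eapply herm_diag_real; eauto).
  rewrite Hai in E. destruct (A i m) as [p q]. simpl in E.
  assert (E2 : 0 <= (p * p + q * q) * (t * (t * al - 2))).
  { eapply Rle_trans; [exact E|]. right; ring. }
  assert (Hn : t * (t * al - 2) < 0).
  { assert (t * al - 2 < 0) by lra. apply Rmult_pos_neg; auto. }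
  assert (Hs : p * p + q * q <= 0).
  { destruct (Rle_or_lt (p * p + q * q) 0); auto.
    assert ((p * p + q * q) * (t * (t * al - 2)) < 0) by (apply Rmult_pos_neg; auto). lra. }
  apply C_ext; simpl; nra.
Qed.

Definition Decomp (m : nat) (A : Mat) (W : nat -> Vec) : Prop :=
  forall i j, (i < m)%nat -> (j < m)%nat -> A i j = Csum m (fun r => Cmul (W r i) (Cconj (W r j))).

Lemma restrict_herm m A : Hermitian (S m) A -> Hermitian m A.
Proof. intros H i j Hi Hj; apply H; lia. Qed.
Lemma restrict_psd m A : (forall i, (i < S m)%nat -> A i m = C0 /\ A m i = C0) -> PSDw (S m) A -> PSDw m A.
Proof. intros HZ H v. rewrite <- quad_Sm_zero by auto. apply H. Qed.

Lemma ldl : forall m A, Hermitian m A -> PSDw m A -> exists W, Decomp m A W.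
Proof.
  induction m as [|m IH]; intros A HH HP.
  { exists (fun _ _ => C0). intros i j Hi; lia. }
  assert (Him : im (A m m) = 0) by (apply (herm_diag_real (S m)); auto).
  assert (Hre : 0 <= re (A m m)) by (apply (psd_diag (S m)); auto).
  destruct (Req_dec (re (A m m)) 0) as [Hz|Hnz].
  -
    assert (HZ : forall i, (i < S m)%nat -> A i m = C0 /\ A m i = C0).
    { intros i Hi. assert (Aim : A i m = C0).
      { destruct (Nat.eq_dec i m) as [->|Hne]. apply C_ext; simpl; auto.
        apply (zero_pivot (S m)); auto. }
      split; auto. rewrite (HH m i) by lia. rewrite Aim; apply Cconj_0. }
    destruct (IH A (restrict_herm m A HH) (restrict_psd m A HZ HP)) as [W HW].
    exists (fun r i => if (Nat.ltb r m && Nat.ltb i m)%bool then W r i else C0).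
    intros i j Hi Hj. change (Csum (S m) ?f) with (Cadd (Csum m f) (f m)). cbv beta.
    rewrite Nat.ltb_irrefl. simpl andb. cbv iota. rewrite Cconj_0.
    rewrite (Csum_ext m _ (fun r => Cmul (if Nat.ltb i m then W r i else C0) (Cconj (if Nat.ltb j m then W r j else C0))))
      by (intros r Hr; apply Nat.ltb_lt in Hr; rewrite Hr; reflexivity).
    destruct (Nat.ltb_spec i m), (Nat.ltb_spec j m).
    + rewrite HW by auto. ring.
    + assert (j = m) by lia; subst j. rewrite (proj1 (HZ i Hi)), Csum_0'; [ring|]. intros; rewrite Cconj_0; ring.
    + assert (i = m) by lia; subst i. rewrite (proj2 (HZ j Hj)), Csum_0'; [ring|]. intros; ring.
    + assert (i = m) by lia; subst i. rewrite (proj2 (HZ j Hj)), Csum_0'; [ring|]. intros; ring.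
  - assert (Ha : 0 < re (A m m)) by lra.
    set (s := sqrt (re (A m m))). assert (Hs : 0 < s) by (apply sqrt_lt_R0; lra).
    assert (Hss : s * s = re (A m m)) by (apply sqrt_sqrt; lra).
    set (b := fun i => Cmul (A i m) (RtoC (/ s))).
    assert (Hbm : b m = RtoC s).
    { unfold b. apply C_ext; simpl; rewrite Him. rewrite <- Hss; field; lra. ring. }
    set (B := fun i j => Csub (A i j) (Cmul (b i) (Cconj (b j)))).
    assert (HBz : forall i, (i < S m)%nat -> B i m = C0 /\ B m i = C0).
    { intros i Hi. unfold B. rewrite Hbm. split.
      - unfold b. apply C_ext; simpl; field; lra.
      - rewrite (HH m i) by lia. unfold b. apply C_ext; simpl; field; lra. }
    assert (HBH : Hermitian (S m) B).
    { intros i j Hi Hj. unfold B. rewrite Cconj_sub, Cconj_mul, Cconj_conj, (HH i j Hi Hj). ring. }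
    assert (HBP : PSDw (S m) B).
    { intro v. set (t := Cmul (Copp (ip m b v)) (RtoC (/ s))).
      set (v' := fun k => if Nat.eqb k m then t else v k).
      rewrite quad_Sm_zero by auto.
      rewrite (quad_ext_v m B v v') by (intros k Hk; unfold v'; destruct (Nat.eqb_spec k m); [lia|auto]).
      rewrite <- quad_Sm_zero by auto. unfold B. rewrite quad_sub_rank1.
      assert (Hip : ip (S m) b v' = C0).
      { unfold ip. change (Csum (S m) ?f) with (Cadd (Csum m f) (f m)). cbv beta.
        fold (ip m b v'). rewrite (ip_ext m b b v' v); [| auto | intros k Hk; unfold v'; destruct (Nat.eqb_spec k m); [lia|auto]].
        unfold v'. rewrite Nat.eqb_refl, Hbm, Cconj_R. unfold t.
        apply C_ext; simpl; field; lra. }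
      rewrite Hip. replace (re (Csub (quad (S m) A v') (Cmul (Cconj C0) C0))) with (re (quad (S m) A v')).
      apply HP. simpl; ring. }
    destruct (IH B (restrict_herm m B HBH) (restrict_psd m B HBz HBP)) as [W HW].
    exists (fun r i => if Nat.ltb r m then (if Nat.ltb i m then W r i else C0) else b i).
    intros i j Hi Hj. change (Csum (S m) ?f) with (Cadd (Csum m f) (f m)). cbv beta.
    rewrite Nat.ltb_irrefl.
    rewrite (Csum_ext m _ (fun r => Cmul (if Nat.ltb i m then W r i else C0) (Cconj (if Nat.ltb j m then W r j else C0))))
      by (intros r Hr; apply Nat.ltb_lt in Hr; rewrite Hr; reflexivity).
    assert (HAB : A i j = Cadd (B i j) (Cmul (b i) (Cconj (b j)))) by (unfold B; ring).
    rewrite HAB.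
    destruct (Nat.ltb_spec i m), (Nat.ltb_spec j m).
    + rewrite HW by auto. ring.
    + assert (j = m) by lia; subst j. rewrite (proj1 (HBz i Hi)), Csum_0'; [ring|]. intros; rewrite Cconj_0; ring.
    + assert (i = m) by lia; subst i. rewrite (proj2 (HBz j Hj)), Csum_0'; [ring|]. intros; ring.
    + assert (i = m) by lia; subst i. rewrite (proj2 (HBz j Hj)), Csum_0'; [ring|]. intros; ring.
Qed.

Lemma quad_decomp n A W v : Decomp n A W ->
  quad n A v = Csum n (fun r => Cmul (Cconj (ip n (W r) v)) (ip n (W r) v)).
Proof.
  intros HD. unfold quad.
  transitivity (Csum n (fun i => Csum n (fun j => Csum n (fun r =>
     Cmul (Cmul (Cconj (v i)) (W r i)) (Cmul (Cconj (W r j)) (v j)))))).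
  { apply Csum_ext; intros i Hi; apply Csum_ext; intros j Hj. rewrite HD by auto.
    rewrite <- Csum_mul_r, <- Csum_mul_l. apply Csum_ext; intros; ring. }
  transitivity (Csum n (fun i => Csum n (fun r => Csum n (fun j =>
     Cmul (Cmul (Cconj (v i)) (W r i)) (Cmul (Cconj (W r j)) (v j)))))).
  { apply Csum_ext; intros; apply Csum_swap. }
  rewrite Csum_swap. apply Csum_ext; intros r _.
  assert (Hc : Cconj (ip n (W r) v) = Csum n (fun i => Cmul (Cconj (v i)) (W r i))).
  { unfold ip; rewrite Cconj_Csum; apply Csum_ext; intros; rewrite Cconj_mul, Cconj_conj; ring. }
  rewrite Hc, <- Csum_mul_r. apply Csum_ext; intros i _. unfold ip. rewrite <- Csum_mul_l. auto.
Qed.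

Lemma CS n u v : re (Cmul (Cconj (ip n u v)) (ip n u v)) <= nrm n u * nrm n v.
Proof.
  set (a := nrm n u). assert (Ha : 0 <= a) by apply nrm_nonneg.
  destruct (Req_dec a 0) as [Ha0|Ha0].
  - assert (Hz : ip n u v = C0).
    { unfold ip; apply Csum_0'; intros i Hi. rewrite (nrm_zero n u Ha0 i Hi), Cconj_0; ring. }
    rewrite Hz, Ha0. simpl. lra.
  - set (c := Cmul (Copp (ip n u v)) (RtoC (/ a))).
    pose proof (nrm_nonneg n (vlin v c u)) as Hw. unfold nrm in Hw.
    rewrite ip_linl, !ip_linr in Hw. rewrite <- (ip_conj n u v) in Hw.
    rewrite (ip_self n u) in Hw. fold a in Hw. rewrite (ip_self n v) in Hw.
    unfold c in Hw. destruct (ip n u v) as [p q]. simpl in Hw |- *.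
    assert (0 < a) by lra.
    assert (E : 0 <= (nrm n v - (p * p + q * q) / a)).
    { eapply Rle_trans; [exact Hw|]. right. field. lra. }
    assert (E2 : (p * p + q * q) / a <= nrm n v) by lra.
    apply (Rmult_le_compat_l a) in E2; [|lra].
    replace (a * ((p * p + q * q) / a)) with (p * p + q * q) in E2 by (field; lra). nra.
Qed.

Definition Le (n : nat) (A : Mat) (l : R) : Prop := forall v, re (quad n A v) <= l * nrm n v.

Lemma trace_decomp n A W : Decomp n A W -> re (trace n A) = Rsum n (fun r => nrm n (W r)).
Proof.
  intros HD. unfold trace. rewrite (Csum_ext n _ (fun i => Csum n (fun r => Cmul (W r i) (Cconj (W r i))))) by (intros; apply HD; auto).
  rewrite Csum_swap, re_Csum. apply Rsum_ext; intros r _. unfold nrm, ip. f_equal. apply Csum_ext; intros; ring.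
Qed.

Lemma le_trace n A : Hermitian n A -> PSDw n A -> Le n A (re (trace n A)).
Proof.
  intros HH HP v. destruct (ldl n A HH HP) as [W HW].
  rewrite (quad_decomp n A W v HW), (trace_decomp n A W HW), re_Csum.
  rewrite Rmult_comm, <- Rsum_scal. apply Rsum_le; intros r _. rewrite Rmult_comm. apply CS.
Qed.

Lemma div_flat c d i : (i < d)%nat -> ((c * d + i) / d = c)%nat.
Proof. intros H. symmetry. apply (Nat.div_unique _ _ _ i); lia. Qed.
Lemma mod_flat c d i : (i < d)%nat -> ((c * d + i) mod d = i)%nat.
Proof. intros H. symmetry. apply (Nat.mod_unique _ _ c); lia. Qed.
Lemma div_bound p n d : (0 < d)%nat -> (p < n * d)%nat -> (p / d < n)%nat.
Proof. intros Hd Hp. pose proof (Nat.div_mod_eq p d). pose proof (Nat.mod_upper_bound p d). 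
  destruct (Nat.lt_ge_cases (p / d) n); auto. nia. Qed.
Lemma flat_idx p d : (0 < d)%nat -> (p / d * d + p mod d = p)%nat.
Proof. intros. pose proof (Nat.div_mod_eq p d). lia. Qed.
Lemma flat_bound p n d k : (0 < d)%nat -> (p < n * d)%nat -> (k < d)%nat -> (p / d * d + k < n * d)%nat.
Proof. intros Hd Hp Hk. pose proof (div_bound p n d Hd Hp). nia. Qed.

Lemma flat_swap n d (F : nat -> nat -> nat -> C) : (0 < d)%nat ->
  Csum (n * d) (fun p => Csum d (fun k => F (p / d)%nat (p mod d)%nat k)) =
  Csum (n * d) (fun p => Csum d (fun i => F (p / d)%nat i (p mod d)%nat)).
Proof.
  intros Hd. rewrite !Csum_flat. apply Csum_ext; intros c Hc.
  rewrite (Csum_ext d _ (fun i => Csum d (fun k => F c i k))) by (intros i Hi; rewrite div_flat, mod_flat; auto).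
  rewrite (Csum_ext d (fun i => Csum d (fun i0 => F ((c * d + i) / d)%nat i0 ((c * d + i) mod d)%nat)) (fun k => Csum d (fun i => F c i k)))
    by (intros i Hi; rewrite div_flat, mod_flat; auto).
  apply Csum_swap.
Qed.

Lemma Csum_swap4 n1 n2 n3 n4 (f : nat -> nat -> nat -> nat -> C) :
  Csum n1 (fun x => Csum n2 (fun y => Csum n3 (fun z => Csum n4 (fun w => f x y z w)))) =
  Csum n3 (fun z => Csum n4 (fun w => Csum n1 (fun x => Csum n2 (fun y => f x y z w)))).
Proof.
  transitivity (Csum n1 (fun x => Csum n3 (fun z => Csum n4 (fun w => Csum n2 (fun y => f x y z w))))).
  { apply Csum_ext; intros x _. rewrite Csum_swap. apply Csum_ext; intros z _. apply Csum_swap. }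
  rewrite Csum_swap. apply Csum_ext; intros z _. apply Csum_swap.
Qed.

Definition KrausRep (d : nat) (S : Superop) (R1 R2 : nat) (K : nat -> nat -> Mat) : Prop :=
  forall i j k l, (i < d)%nat -> (j < d)%nat -> (k < d)%nat -> (l < d)%nat ->
    S i j k l = Csum R1 (fun a => Csum R2 (fun s => Cmul (K a s i k) (Cconj (K a s j l)))).

Lemma ampl_entry n d S X p q : (0 < d)%nat -> (p < n * d)%nat -> (q < n * d)%nat ->
  ampl n d S X p q = Csum d (fun k => Csum d (fun l => Cmul (S (p mod d)%nat (q mod d)%nat k l) (X (p / d * d + k)%nat (q / d * d + l)%nat))).
Proof.
  intros Hd Hp Hq. unfold ampl, applyS.
  apply Nat.ltb_lt in Hp. apply Nat.ltb_lt in Hq. rewrite Hp, Hq. simpl andb.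
  assert (H1 : Nat.ltb (p mod d) d = true) by (apply Nat.ltb_lt, Nat.mod_upper_bound; lia).
  assert (H2 : Nat.ltb (q mod d) d = true) by (apply Nat.ltb_lt, Nat.mod_upper_bound; lia).
  rewrite H1, H2. reflexivity.
Qed.

Lemma Csum_ctx R f a b c : Cmul a (Cmul (Cmul (Csum R f) b) c) = Csum R (fun x => Cmul a (Cmul (Cmul (f x) b) c)).
Proof. induction R; simpl. ring. rewrite <- IHR. ring. Qed.

Lemma Csum_ctx2 R f a b : Cmul a (Cmul b (Csum R f)) = Csum R (fun x => Cmul a (Cmul b (f x))).
Proof. induction R; simpl. ring. rewrite <- IHR. ring. Qed.

Section KrausQuad.
Variables (n d R1 R2 : nat) (S : Superop) (K : nat -> nat -> Mat) (X : Mat) (v : Vec).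
Hypothesis Hd : (0 < d)%nat.
Hypothesis HK : KrausRep d S R1 R2 K.

Definition Tt a s c i k c' j l : C :=
  Cmul (Cmul (Cconj (v (c * d + i)%nat)) (K a s i k))
       (Cmul (X (c * d + k)%nat (c' * d + l)%nat) (Cmul (Cconj (K a s j l)) (v (c' * d + j)%nat))).

Definition yv a s : Vec := fun p => Csum d (fun i => Cmul (Cconj (K a s i (p mod d)%nat)) (v (p / d * d + i)%nat)).

Lemma kraus_lhs : quad (n * d) (ampl n d S X) v =
  Csum R1 (fun a => Csum R2 (fun s => Csum (n * d) (fun p => Csum (n * d) (fun q => Csum d (fun k => Csum d (fun l =>
     Tt a s (p / d) (p mod d) k (q / d) (q mod d) l))))))%nat.
Proof.
  unfold quad.
  transitivity (Csum (n * d) (fun p => Csum (n * d) (fun q => Csum d (fun k => Csum d (fun l =>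
     Csum R1 (fun a => Csum R2 (fun s => Tt a s (p / d) (p mod d) k (q / d) (q mod d) l)))))))%nat.
  { apply Csum_ext; intros p Hp; apply Csum_ext; intros q Hq. rewrite ampl_entry by auto.
    rewrite <- Csum_mul_r, <- Csum_mul_l. apply Csum_ext; intros k Hk.
    rewrite <- Csum_mul_r, <- Csum_mul_l. apply Csum_ext; intros l Hl.
    rewrite HK by (auto; apply Nat.mod_upper_bound; lia).
    rewrite Csum_ctx. apply Csum_ext; intros a Ha.
    rewrite Csum_ctx. apply Csum_ext; intros s Hs.
    unfold Tt. rewrite !flat_idx by auto. ring. }
  transitivity (Csum (n * d) (fun p => Csum (n * d) (fun q => Csum R1 (fun a => Csum R2 (fun s =>
     Csum d (fun k => Csum d (fun l => Tt a s (p / d) (p mod d) k (q / d) (q mod d) l)))))))%nat.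
  { apply Csum_ext; intros p _; apply Csum_ext; intros q _. apply Csum_swap4. }
  apply Csum_swap4.
Qed.

Lemma kraus_as a s : Csum (n * d) (fun p => Csum (n * d) (fun q => Csum d (fun k => Csum d (fun l =>
     Tt a s (p / d) (p mod d) k (q / d) (q mod d) l))))%nat = quad (n * d) X (yv a s).
Proof.
  transitivity (Csum (n * d) (fun p => Csum d (fun k => Csum (n * d) (fun q => Csum d (fun l =>
     Tt a s (p / d) (p mod d) k (q / d) (q mod d) l))))%nat).
  { apply Csum_ext; intros p _. apply Csum_swap. }
  rewrite (flat_swap n d (fun c i k => Csum (n * d) (fun q => Csum d (fun l => Tt a s c i k (q / d) (q mod d) l))) Hd).
  transitivity (Csum (n * d) (fun p => Csum d (fun i => Csum (n * d) (fun q => Csum d (fun j =>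
     Tt a s (p / d) i (p mod d) (q / d) j (q mod d)))))%nat).
  { apply Csum_ext; intros p _; apply Csum_ext; intros i _.
    apply (flat_swap n d (fun c' j l => Tt a s (p / d) i (p mod d) c' j l) Hd). }
  unfold quad.
  transitivity (Csum (n * d) (fun p => Csum (n * d) (fun q => Csum d (fun i => Csum d (fun j =>
     Tt a s (p / d) i (p mod d) (q / d) j (q mod d)))))%nat).
  { apply Csum_ext; intros p _. symmetry; apply Csum_swap. }
  apply Csum_ext; intros p Hp; apply Csum_ext; intros q Hq.
  unfold yv. rewrite Cconj_Csum. rewrite <- Csum_mul_r. apply Csum_ext; intros i Hi.
  rewrite Csum_ctx2. apply Csum_ext; intros j Hj.
  unfold Tt. rewrite !flat_idx by auto. rewrite Cconj_mul, Cconj_conj. ring.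
Qed.

Lemma kraus_quad : quad (n * d) (ampl n d S X) v = Csum R1 (fun a => Csum R2 (fun s => quad (n * d) X (yv a s))).
Proof. rewrite kraus_lhs. apply Csum_ext; intros a _; apply Csum_ext; intros s _. apply kraus_as. Qed.
End KrausQuad.

Lemma kraus_CP d S R1 R2 K : (0 < d)%nat -> KrausRep d S R1 R2 K -> CP d S.
Proof.
  intros Hd HK n X Hsup [HXH HXP]. split.
  - intros p q Hp Hq. rewrite !ampl_entry by auto. rewrite Cconj_Csum.
    rewrite (Csum_ext d (fun k => Cconj _) (fun k => Csum d (fun l => Cconj (Cmul (S (q mod d)%nat (p mod d)%nat k l) (X (q / d * d + k)%nat (p / d * d + l)%nat)))))
      by (intros; apply Cconj_Csum).
    rewrite (Csum_swap d d (fun k l => Cconj (Cmul (S (q mod d)%nat (p mod d)%nat k l) (X (q / d * d + k)%nat (p / d * d + l)%nat)))).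
    apply Csum_ext; intros k Hk; apply Csum_ext; intros l Hl.
    assert (Hpm : (p mod d < d)%nat) by (apply Nat.mod_upper_bound; lia).
    assert (Hqm : (q mod d < d)%nat) by (apply Nat.mod_upper_bound; lia).
    rewrite Cconj_mul, (HK (p mod d)%nat), (HK (q mod d)%nat) by auto.
    rewrite (HXH (p / d * d + k)%nat (q / d * d + l)%nat) by (apply flat_bound; auto).
    f_equal. rewrite !Cconj_Csum. apply Csum_ext; intros a _. rewrite Cconj_Csum. apply Csum_ext; intros s _.
    rewrite Cconj_mul, Cconj_conj. ring.
  - intros v. rewrite (kraus_quad n d R1 R2 S K X v Hd HK). rewrite re_Csum, im_Csum. split.
    + rewrite <- (Rsum_0 R1). apply Rsum_ext; intros a _. rewrite im_Csum, <- (Rsum_0 R2).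
      apply Rsum_ext; intros s _. apply HXP.
    + apply Rsum_nonneg; intros a _. rewrite re_Csum. apply Rsum_nonneg; intros s _. apply HXP.
Qed.

Definition Smp (om : nat -> Mat) : Superop := fun i j k l => if Nat.eqb k l then om k i j else C0.

Lemma applyS_mp d om X i j : (i < d)%nat -> (j < d)%nat ->
  applyS d (Smp om) X i j = Csum d (fun k => Cmul (om k i j) (X k k)).
Proof.
  intros Hi Hj. unfold applyS. apply Nat.ltb_lt in Hi; apply Nat.ltb_lt in Hj. rewrite Hi, Hj. simpl.
  apply Csum_ext; intros k Hk. unfold Smp.
  rewrite <- (Csum_delta' d k (fun l => Cmul (om k i j) (X k l)) Hk). apply Csum_ext; intros l _.
  destruct (Nat.eqb k l); ring.
Qed.

Definition Wch (d : nat) (om : nat -> Mat) (a : nat) : nat -> Vec :=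
  epsilon (inhabits (fun _ _ => C0)) (fun W => Decomp d (om a) W).

Lemma mp_channel d om : (0 < d)%nat ->
  (forall a, (a < d)%nat -> Hermitian d (om a) /\ PSDw d (om a) /\ trace d (om a) = C1) ->
  (forall i j, (i < d)%nat -> (j < d)%nat -> Csum d (fun k => om k i j) = Idm d i j) ->
  UnitalChannel d (Smp om).
Proof.
  intros Hd Hom Hsum. split; [|split].
  - apply (kraus_CP d (Smp om) d d (fun a s i k => if Nat.eqb k a then Wch d om a s i else C0) Hd).
    intros i j k l Hi Hj Hk Hl.
    rewrite (Csum_ext d _ (fun a => if Nat.eqb a k then (if Nat.eqb a l then om a i j else C0) else C0)).
    + unfold Smp. rewrite (Csum_delta d k (fun a => if Nat.eqb a l then om a i j else C0) Hk).
      destruct (Nat.eqb_spec k l), (Nat.eqb_spec l k); auto; lia.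
    + intros a Ha. destruct (Hom a Ha) as [HH [HP _]].
      assert (HW : Decomp d (om a) (Wch d om a)).
      { unfold Wch. apply epsilon_spec. apply ldl; auto. }
      rewrite (Nat.eqb_sym a k), (Nat.eqb_sym a l).
      destruct (Nat.eqb_spec k a), (Nat.eqb_spec l a).
      * subst. rewrite HW by auto. auto.
      * apply Csum_0'; intros; rewrite Cconj_0; ring.
      * apply Csum_0'; intros; ring.
      * apply Csum_0'; intros; ring.
  - intros X. unfold trace. rewrite (Csum_ext d _ (fun i => Csum d (fun k => Cmul (om k i i) (X k k))))
      by (intros; apply applyS_mp; auto).
    rewrite Csum_swap. apply Csum_ext; intros k Hk. rewrite Csum_mul_r.
    destruct (Hom k Hk) as [_ [_ Ht]]. unfold trace in Ht. rewrite Ht. ring.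
  - intros i j. destruct (Nat.ltb_spec i d), (Nat.ltb_spec j d).
    + rewrite applyS_mp by auto. rewrite <- Hsum by auto. apply Csum_ext; intros k Hk.
      unfold Idm. rewrite Nat.eqb_refl. apply Nat.ltb_lt in Hk. rewrite Hk. simpl. ring.
    + unfold applyS, Idm. assert (H0' := H0). apply Nat.ltb_ge in H0'. rewrite H0'. rewrite Bool.andb_false_r.
      destruct (Nat.ltb i d), (Nat.eqb_spec i j); simpl; auto. lia.
    + unfold applyS, Idm. apply Nat.ltb_ge in H. rewrite H. simpl. auto.
    + unfold applyS, Idm. apply Nat.ltb_ge in H. rewrite H. simpl. auto.
Qed.

Lemma quad_lin n A B a b v : quad n (fun i j => Cadd (Cmul a (A i j)) (Cmul b (B i j))) v =
  Cadd (Cmul a (quad n A v)) (Cmul b (quad n B v)).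
Proof.
  unfold quad. rewrite <- !Csum_mul_l, <- Csum_add. apply Csum_ext; intros i _.
  rewrite <- !Csum_mul_l, <- Csum_add. apply Csum_ext; intros; ring.
Qed.
Lemma trace_lin n A B a b : trace n (fun i j => Cadd (Cmul a (A i j)) (Cmul b (B i j))) =
  Cadd (Cmul a (trace n A)) (Cmul b (trace n B)).
Proof. unfold trace. rewrite <- !Csum_mul_l, <- Csum_add. auto. Qed.
Lemma mv_Idm d v i : (i < d)%nat -> mv d (Idm d) v i = v i.
Proof. intros Hi. unfold mv, Idm. apply Nat.ltb_lt in Hi as Hi'. rewrite Hi'. simpl.
  rewrite <- (Csum_delta' d i v Hi). apply Csum_ext; intros j _. destruct (Nat.eqb i j); ring. Qed.
Lemma quad_Idm d v : quad d (Idm d) v = RtoC (nrm d v).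
Proof. rewrite quad_ip, <- ip_self. apply ip_ext; auto. intros; apply mv_Idm; auto. Qed.
Lemma Csum_const n c : Csum n (fun _ => c) = Cmul (RtoC (INR n)) c.
Proof. induction n; simpl Csum. Csolve. rewrite IHn, S_INR. Csolve. Qed.
Lemma trace_Idm d : trace d (Idm d) = RtoC (INR d).
Proof. unfold trace. rewrite (Csum_ext d _ (fun _ => C1)). rewrite Csum_const; Csolve.
  intros i Hi. unfold Idm. apply Nat.ltb_lt in Hi. rewrite Hi, Nat.eqb_refl. auto. Qed.
Lemma Idm_herm d : Hermitian d (Idm d).
Proof. intros i j Hi Hj. unfold Idm. rewrite Nat.eqb_sym.
  apply Nat.ltb_lt in Hi; apply Nat.ltb_lt in Hj. rewrite Hi, Hj. simpl. destruct (Nat.eqb j i); Csolve. Qed.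

Lemma psd_trace0 n A : Hermitian n A -> PSDw n A -> re (trace n A) = 0 -> forall i j, (i < n)%nat -> (j < n)%nat -> A i j = C0.
Proof.
  intros HH HP Ht i j Hi Hj. destruct (ldl n A HH HP) as [W HW].
  rewrite (trace_decomp n A W HW) in Ht.
  assert (Hz : forall r, (r < n)%nat -> nrm n (W r) = 0).
  { apply Rsum_zero_nonneg; auto. intros; apply nrm_nonneg. }
  rewrite HW by auto. apply Csum_0'. intros r Hr. rewrite (nrm_zero n (W r) (Hz r Hr) i Hi). ring.
Qed.

Lemma quad_scal n A c v : quad n (fun i j => Cmul c (A i j)) v = Cmul c (quad n A v).
Proof. unfold quad. rewrite <- Csum_mul_l. apply Csum_ext; intros. rewrite <- Csum_mul_l. apply Csum_ext; intros; ring. Qed.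
Lemma trace_scal n A c : trace n (fun i j => Cmul c (A i j)) = Cmul c (trace n A).
Proof. unfold trace. rewrite <- Csum_mul_l. auto. Qed.

Lemma Csum_cut d k (c : C) (g : nat -> C) : (k <= d)%nat ->
  Csum d (fun a => if Nat.ltb a k then c else g a) = Cadd (Cmul (RtoC (INR k)) c) (Csum (d - k) (fun a => g (k + a)%nat)).
Proof.
  intros Hk. replace d with (k + (d - k))%nat at 1 by lia. rewrite Csum_split.
  rewrite (Csum_ext k _ (fun _ => c)) by (intros a Ha; apply Nat.ltb_lt in Ha; rewrite Ha; auto).
  rewrite Csum_const. f_equal. apply Csum_ext; intros a _.
  assert (Hf : Nat.ltb (k + a) k = false) by (apply Nat.ltb_ge; lia). rewrite Hf; auto.
Qed.

Lemma construct d k sg : (1 <= k <= d)%nat -> Density d sg -> Le d sg (/ INR k) ->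
  exists S, UnitalChannel d S /\ applyS d S (PiK k) = sg.
Proof.
  intros Hk [Hsup [[HH HP] Htr]] HL.
  assert (HPw : PSDw d sg) by (intros v; apply HP).
  assert (Hk0 : 0 < INR k) by (apply lt_0_INR; lia).
  set (tau := fun i j => Cmul (RtoC (/ (INR d - INR k))) (Cadd (Cmul C1 (Idm d i j)) (Cmul (RtoC (- INR k)) (sg i j)))).
  set (om := fun a : nat => if Nat.ltb a k then sg else tau).
  exists (Smp om). split.
  - apply mp_channel; [lia| |].
    + intros a Ha. unfold om. destruct (Nat.ltb_spec a k).
      * split; auto.
      * assert (Hkd : INR k < INR d) by (apply lt_INR; lia).
        split; [|split].
        -- intros i j Hi Hj. unfold tau. rewrite Cconj_mul, Cconj_R, Cconj_add, !Cconj_mul, Cconj_R, Cconj_1.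
           rewrite (Idm_herm d i j), (HH i j) by auto. auto.
        -- intros v. unfold tau. rewrite quad_scal, quad_lin, quad_Idm.
           pose proof (HL v) as Hv. pose proof (nrm_nonneg d v).
           destruct (quad d sg v) as [p q]. simpl in Hv |- *.
           assert (0 < / (INR d - INR k)) by (apply Rinv_0_lt_compat; lra).
           replace (/ (INR d - INR k) * (1 * nrm d v - 0 * 0 + (- INR k * p - 0 * q)) - 0 * (1 * 0 + 0 * nrm d v + (- INR k * q + 0 * p)))
             with (/ (INR d - INR k) * (nrm d v - INR k * p)) by ring.
           apply Rmult_le_pos; [lra|].
           apply (Rmult_le_compat_l (INR k)) in Hv; [|lra].
           rewrite <- Rmult_assoc, Rinv_r, Rmult_1_l in Hv by lra. lra.
        -- unfold tau. rewrite trace_scal, trace_lin, trace_Idm, Htr. apply C_ext; simpl; field; lra.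
    + intros i j Hi Hj. unfold om.
      rewrite (Csum_ext d _ (fun a => if Nat.ltb a k then sg i j else tau i j)) by (intros a _; destruct (Nat.ltb a k); auto).
      rewrite (Csum_cut d k (sg i j) (fun a => tau i j)) by lia.
      destruct (Nat.eq_dec k d) as [->|Hne].
      * rewrite Nat.sub_diag. simpl Csum.
        assert (HM := psd_trace0 d (fun i j => Cadd (Cmul C1 (Idm d i j)) (Cmul (RtoC (- INR d)) (sg i j)))).
        rewrite trace_lin, trace_Idm, Htr in HM.
        assert (E := HM ltac:(intros i' j' Hi' Hj'; rewrite !Cconj_add, !Cconj_mul, Cconj_R, Cconj_1, (Idm_herm d i' j'), (HH i' j') by auto; auto)
                        ltac:(intros v; rewrite quad_lin, quad_Idm; pose proof (HL v) as Hv;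
                              destruct (quad d sg v) as [p q]; simpl in Hv |- *;
                              apply (Rmult_le_compat_l (INR d)) in Hv; [|lra];
                              rewrite <- Rmult_assoc, Rinv_r, Rmult_1_l in Hv by lra; lra)
                        ltac:(simpl; ring) i j Hi Hj).
        replace (Idm d i j) with (Cadd (Cadd (Cmul C1 (Idm d i j)) (Cmul (RtoC (- INR d)) (sg i j))) (Cmul (RtoC (INR d)) (sg i j)))
          by (rewrite RtoC_opp; ring).
        rewrite E; ring.
      * rewrite Csum_const. unfold tau.
        assert (Hkd : INR k < INR d) by (apply lt_INR; lia).
        rewrite minus_INR by lia. apply C_ext; simpl; field; lra.
  - extensionality i. extensionality j.
    destruct (Nat.ltb_spec i d), (Nat.ltb_spec j d).
    + rewrite applyS_mp by auto. unfold om.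
      rewrite (Csum_ext d _ (fun a => if Nat.ltb a k then Cmul (sg i j) (RtoC (/ INR k)) else C0)).
      * rewrite (Csum_cut d k _ (fun _ => C0)) by lia. rewrite Csum_0. apply C_ext; simpl; field; lra.
      * intros a Ha. unfold PiK. rewrite Nat.eqb_refl. destruct (Nat.ltb a k); simpl; auto. ring.
    + unfold applyS. assert (E : Nat.ltb j d = false) by (apply Nat.ltb_ge; lia). rewrite E, Bool.andb_false_r.
      symmetry; apply Hsup; lia.
    + unfold applyS. assert (E : Nat.ltb i d = false) by (apply Nat.ltb_ge; lia). rewrite E. simpl.
      symmetry; apply Hsup; lia.
    + unfold applyS. assert (E : Nat.ltb i d = false) by (apply Nat.ltb_ge; lia). rewrite E. simpl.
      symmetry; apply Hsup; lia.
Qed.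

Lemma quad_ext_m n A B v : (forall i j, (i < n)%nat -> (j < n)%nat -> A i j = B i j) -> quad n A v = quad n B v.
Proof. intros H; unfold quad; apply Csum_ext; intros i Hi; apply Csum_ext; intros j Hj; rewrite H; auto. Qed.

Lemma applyS_lin d S A B a b i j : applyS d S (fun k l => Cadd (Cmul a (A k l)) (Cmul b (B k l))) i j =
  Cadd (Cmul a (applyS d S A i j)) (Cmul b (applyS d S B i j)).
Proof.
  unfold applyS. destruct (Nat.ltb i d && Nat.ltb j d)%bool; [|ring].
  rewrite <- !Csum_mul_l, <- Csum_add. apply Csum_ext; intros k _.
  rewrite <- !Csum_mul_l, <- Csum_add. apply Csum_ext; intros; ring.
Qed.

Definition Dg (f : nat -> R) : Mat := fun i j => if Nat.eqb i j then RtoC (f i) else C0.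
Lemma quad_Dg n f v : quad n (Dg f) v = Csum n (fun i => Cmul (RtoC (f i)) (Cmul (Cconj (v i)) (v i))).
Proof. rewrite quad_ip. unfold ip. apply Csum_ext; intros i Hi. unfold mv.
  rewrite (Csum_ext n _ (fun j => if Nat.eqb i j then Cmul (RtoC (f i)) (v j) else C0)) by (intros; unfold Dg; destruct (Nat.eqb i i0); ring).
  rewrite Csum_delta' by auto. ring. Qed.

Lemma necessity d k S sg : (1 <= d)%nat -> (1 <= k)%nat -> UnitalChannel d S -> applyS d S (PiK k) = sg -> Le d sg (/ INR k).
Proof.
  intros Hd Hk [HCP [_ HU]] Hs v.
  set (f := fun i => if Nat.ltb i k then 0 else 1).
  set (M := fun i j => if Nat.ltb i d then Dg f i j else C0).
  assert (HkR : 0 < INR k) by (apply lt_0_INR; lia).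
  assert (HM : forall i j, (i < d)%nat -> (j < d)%nat -> M i j = Cadd (Cmul C1 (Idm d i j)) (Cmul (RtoC (- INR k)) (PiK k i j))).
  { intros i j Hi Hj. unfold M, Dg, Idm, PiK, f. apply Nat.ltb_lt in Hi. rewrite Hi. simpl.
    destruct (Nat.eqb i j), (Nat.ltb i k); simpl; apply C_ext; simpl; try field; try lra. }
  assert (Hsup : supported (1 * d) M).
  { intros i j [H|H]; unfold M, Dg.
    - rewrite Nat.mul_1_l in H. apply Nat.ltb_ge in H. rewrite H. auto.
    - rewrite Nat.mul_1_l in H. destruct (Nat.ltb_spec i d); auto. destruct (Nat.eqb_spec i j); auto. lia. }
  assert (HPM : PSD (1 * d) M).
  { rewrite Nat.mul_1_l. split.
    - intros i j Hi Hj. rewrite !HM by auto. rewrite Cconj_add, !Cconj_mul, Cconj_1, Cconj_R, (Idm_herm d i j) by auto.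
      unfold PiK. rewrite Nat.eqb_sym. destruct (Nat.eqb_spec j i).
      + subst. destruct (Nat.ltb i k); simpl; rewrite ?Cconj_R, ?Cconj_0; auto.
      + rewrite !Bool.andb_false_r. rewrite Cconj_0; auto.
    - intros w. rewrite (quad_ext_m d M (Dg f)) by (intros i j Hi Hj; unfold M; apply Nat.ltb_lt in Hi; rewrite Hi; auto).
      rewrite quad_Dg, re_Csum, im_Csum. split.
      + rewrite <- (Rsum_0 d). apply Rsum_ext; intros. destruct (w i); simpl; ring.
      + apply Rsum_nonneg; intros i _. unfold f. destruct (Nat.ltb i k); destruct (w i); simpl; nra. }
  destruct (HCP 1%nat M Hsup HPM) as [_ HQ]. destruct (HQ v) as [_ HQ2].
  rewrite Nat.mul_1_l in HQ2.
  rewrite (quad_ext_m d _ (fun i j => Cadd (Cmul C1 (Idm d i j)) (Cmul (RtoC (- INR k)) (sg i j)))) in HQ2.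
  - rewrite quad_lin, quad_Idm in HQ2. destruct (quad d sg v) as [p q]. simpl in HQ2 |- *.
    apply (Rmult_le_reg_l (INR k)); auto. rewrite <- Rmult_assoc, Rinv_r, Rmult_1_l by lra. lra.
  - intros i j Hi Hj. assert (Hi' := Hi). assert (Hj' := Hj).
    rewrite <- (Nat.mul_1_l d) in Hi', Hj'. rewrite ampl_entry by (auto; lia).
    rewrite <- Hs, <- (HU i j), <- applyS_lin.
    rewrite (Nat.div_small i d), (Nat.div_small j d), (Nat.mod_small i d), (Nat.mod_small j d) by lia.
    unfold applyS. apply Nat.ltb_lt in Hi; apply Nat.ltb_lt in Hj. rewrite Hi, Hj. simpl andb.
    apply Csum_ext; intros k0 Hk0; apply Csum_ext; intros l Hl. f_equal. simpl. apply HM; auto.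
Qed.

Definition incr (phi : nat -> nat) : Prop := forall n, (phi n < phi (S n))%nat.
Lemma incr_ge phi : incr phi -> forall n, (n <= phi n)%nat.
Proof. intros H n; induction n; [lia|]. specialize (H n); lia. Qed.
Lemma incr_mono phi : incr phi -> forall n m, (n <= m)%nat -> (phi n <= phi m)%nat.
Proof. intros H n m Hnm; induction Hnm; auto. specialize (H m); lia. Qed.
Lemma incr_comp phi psi : incr phi -> incr psi -> incr (fun n => phi (psi n)).
Proof. intros H1 H2 n. pose proof (incr_mono phi H1 (S (psi n)) (psi (S n)) (H2 n)). specialize (H1 (psi n)). lia. Qed.
Lemma cv_sub u l phi : incr phi -> Un_cv u l -> Un_cv (fun n => u (phi n)) l.
Proof. intros Hp Hu e He. destruct (Hu e He) as [N HN]. exists N. intros n Hn. apply HN. pose proof (incr_ge phi Hp n). lia. Qed.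

Lemma inv_small e : 0 < e -> exists N, forall n, (N <= n)%nat -> / (INR n + 1) < e.
Proof.
  intros He. destruct (archimed_cor1 e He) as [N [HN HN0]]. exists N. intros n Hn.
  apply Rle_lt_trans with (/ INR N); auto. apply Rinv_le_contravar. apply lt_0_INR; lia.
  apply le_INR in Hn. lra.
Qed.

Lemma bw1 (u : nat -> R) M : (forall n, Rabs (u n) <= M) -> exists phi l, incr phi /\ Un_cv (fun n => u (phi n)) l.
Proof.
  intros HM.
  destruct (Bolzano_Weierstrass u (fun c => - M <= c <= M) (compact_P3 (- M) M)) as [l Hl].
  { intros n. specialize (HM n). revert HM; unfold Rabs; destruct (Rcase_abs (u n)); intros; lra. }
  assert (Hpick : forall N k : nat, {p : nat | (N <= p)%nat /\ Rabs (u p - l) < / (INR k + 1)}).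
  { intros N k. apply constructive_indefinite_description.
    assert (Hpos : 0 < / (INR k + 1)) by (apply Rinv_0_lt_compat; pose proof (pos_INR k); lra).
    destruct (Hl (disc l (mkposreal _ Hpos)) N) as [p [Hp1 Hp2]].
    - exists (mkposreal _ Hpos). intros y Hy; auto.
    - exists p; split; auto. }
  set (g := fun N k => proj1_sig (Hpick N k)).
  assert (Hg : forall N k, (N <= g N k)%nat /\ Rabs (u (g N k) - l) < / (INR k + 1)) by (intros; unfold g; apply proj2_sig).
  set (phi := fix phi n := match n with O => g O O | S m => g (S (phi m)) (S m) end).
  exists phi, l. split.
  - intros n. simpl. destruct (Hg (S (phi n)) (S n)). lia.
  - intros e He. destruct (inv_small e He) as [N HN]. exists N. intros n Hn. unfold Rdist.
    apply Rlt_trans with (/ (INR n + 1)); auto.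
    destruct n; simpl phi; apply Hg.
Qed.

Lemma bw_list (X : Type) (fs : list (X -> R)) (x : nat -> X) M :
  (forall f n, In f fs -> Rabs (f (x n)) <= M) ->
  exists phi, incr phi /\ forall f, In f fs -> exists l, Un_cv (fun n => f (x (phi n))) l.
Proof.
  induction fs as [|f fs IH]; intros HM.
  - exists (fun n => n). split; [intros n; lia|]. intros f [].
  - destruct IH as [phi [Hphi Hc]]. { intros; apply HM; simpl; auto. }
    destruct (bw1 (fun n => f (x (phi n))) M) as [psi [l [Hpsi Hl]]]. { intros; apply HM; simpl; auto. }
    exists (fun n => phi (psi n)). split. apply incr_comp; auto.
    intros g [<-|Hg]. exists l; auto.
    destruct (Hc g Hg) as [l' Hl']. exists l'. apply (cv_sub (fun n => g (x (phi n)))); auto.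
Qed.

Definition limv (u : nat -> R) : R := epsilon (inhabits 0) (fun l => Un_cv u l).
Lemma limv_spec u l : Un_cv u l -> Un_cv u (limv u).
Proof. intros H. unfold limv. apply epsilon_spec. exists l; auto. Qed.
Lemma limv_eq u l : Un_cv u l -> limv u = l.
Proof. intros H. apply (UL_sequence u); auto. apply limv_spec with l; auto. Qed.

Lemma cv_const c : Un_cv (fun _ => c) c.
Proof. intros e He. exists O. intros. unfold Rdist. rewrite Rminus_diag, Rabs_R0. auto. Qed.
Lemma cv_ext u v l : (forall n, u n = v n) -> Un_cv u l -> Un_cv v l.
Proof. intros H Hu e He. destruct (Hu e He) as [N HN]. exists N. intros n Hn. rewrite <- H. auto. Qed.

Definition Cconv (z : nat -> C) (w : C) : Prop :=
  Un_cv (fun n => re (z n)) (re w) /\ Un_cv (fun n => im (z n)) (im w).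
Lemma Cconv_const c : Cconv (fun _ => c) c.
Proof. split; apply cv_const. Qed.
Lemma Cconv_add z1 z2 w1 w2 : Cconv z1 w1 -> Cconv z2 w2 -> Cconv (fun n => Cadd (z1 n) (z2 n)) (Cadd w1 w2).
Proof. intros [a b] [c e]; split; simpl; apply CV_plus; auto. Qed.
Lemma Cconv_mul z1 z2 w1 w2 : Cconv z1 w1 -> Cconv z2 w2 -> Cconv (fun n => Cmul (z1 n) (z2 n)) (Cmul w1 w2).
Proof. intros [a b] [c e]; split; simpl; [apply CV_minus|apply CV_plus]; apply CV_mult; auto. Qed.
Lemma Cconv_conj z w : Cconv z w -> Cconv (fun n => Cconj (z n)) (Cconj w).
Proof. intros [a b]; split; simpl; auto.
  apply (cv_ext (opp_seq (fun n => im (z n)))). intros; unfold opp_seq; auto. apply CV_opp; auto. Qed.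
Lemma Cconv_Csum m (z : nat -> nat -> C) (w : nat -> C) : (forall i, (i < m)%nat -> Cconv (fun n => z n i) (w i)) ->
  Cconv (fun n => Csum m (z n)) (Csum m w).
Proof. induction m; intros H; simpl. apply Cconv_const.
  apply (Cconv_add (fun n => Csum m (z n)) (fun n => z n m)). apply IHm; intros; apply H; lia. apply H; lia. Qed.
Lemma Cconv_quad m (A : nat -> Mat) (Ai : Mat) (v : nat -> Vec) (vi : Vec) :
  (forall i j, (i < m)%nat -> (j < m)%nat -> Cconv (fun n => A n i j) (Ai i j)) ->
  (forall i, (i < m)%nat -> Cconv (fun n => v n i) (vi i)) ->
  Cconv (fun n => quad m (A n) (v n)) (quad m Ai vi).
Proof.
  intros HA Hv. unfold quad. apply Cconv_Csum; intros i Hi. apply (Cconv_Csum m (fun n j => Cmul (Cconj (v n i)) (Cmul (A n i j) (v n j)))).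
  intros j Hj. apply (Cconv_mul (fun n => Cconj (v n i))). apply Cconv_conj; auto.
  apply (Cconv_mul (fun n => A n i j)); auto.
Qed.
Lemma Cconv_nrm m (v : nat -> Vec) (vi : Vec) : (forall i, (i < m)%nat -> Cconv (fun n => v n i) (vi i)) ->
  Un_cv (fun n => nrm m (v n)) (nrm m vi).
Proof. intros Hv. unfold nrm, ip. apply (Cconv_Csum m (fun n i => Cmul (Cconj (v n i)) (v n i))).
  intros i Hi. apply (Cconv_mul (fun n => Cconj (v n i))); [apply Cconv_conj|]; auto. Qed.

Lemma mat_compact d (A : nat -> Mat) M :
  (forall n i j, (i < d)%nat -> (j < d)%nat -> Rabs (re (A n i j)) <= M /\ Rabs (im (A n i j)) <= M) ->
  exists phi Ai, incr phi /\ forall i j, (i < d)%nat -> (j < d)%nat -> Cconv (fun n => A (phi n) i j) (Ai i j).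
Proof.
  intros HM.
  set (fs := flat_map (fun i => map (fun j (B : Mat) => re (B i j)) (seq 0 d) ++ map (fun j (B : Mat) => im (B i j)) (seq 0 d)) (seq 0 d)).
  destruct (bw_list Mat fs A M) as [phi [Hphi Hc]].
  { intros f n Hf. unfold fs in Hf. apply in_flat_map in Hf. destruct Hf as [i [Hi Hf]]. apply in_seq in Hi.
    apply in_app_or in Hf. destruct Hf as [Hf|Hf]; apply in_map_iff in Hf; destruct Hf as [j [<- Hj]]; apply in_seq in Hj;
    destruct (HM n i j) as [H1 H2]; try lia; auto. }
  exists phi, (fun i j => mkC (limv (fun n => re (A (phi n) i j))) (limv (fun n => im (A (phi n) i j)))).
  split; auto. intros i j Hi Hj. split; simpl.
  - destruct (Hc (fun B : Mat => re (B i j))) as [l Hl].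
    + unfold fs. apply in_flat_map. exists i. split. apply in_seq; lia. apply in_or_app; left. apply in_map_iff. exists j; split; auto. apply in_seq; lia.
    + apply limv_spec with l; auto.
  - destruct (Hc (fun B : Mat => im (B i j))) as [l Hl].
    + unfold fs. apply in_flat_map. exists i. split. apply in_seq; lia. apply in_or_app; right. apply in_map_iff. exists j; split; auto. apply in_seq; lia.
    + apply limv_spec with l; auto.
Qed.

Lemma vec_compact d (v : nat -> Vec) M : (1 <= d)%nat ->
  (forall n i, (i < d)%nat -> Rabs (re (v n i)) <= M /\ Rabs (im (v n i)) <= M) ->
  exists phi w, incr phi /\ forall i, (i < d)%nat -> Cconv (fun n => v (phi n) i) (w i).
Proof.
  intros Hd HM. destruct (mat_compact d (fun n i j => v n i) M) as [phi [Ai [Hphi Hc]]].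
  { intros; apply HM; auto. }
  exists phi, (fun i => Ai i O). split; [auto|]. intros i Hi. apply (Hc i O); lia.
Qed.

Lemma coord_bound n v i : (i < n)%nat -> Rabs (re (v i)) <= sqrt (nrm n v) /\ Rabs (im (v i)) <= sqrt (nrm n v).
Proof.
  intros Hi. rewrite nrm_sum.
  assert (H : re (v i) * re (v i) + im (v i) * im (v i) <= Rsum n (fun i => re (v i) * re (v i) + im (v i) * im (v i))).
  { clear -Hi. induction n; [lia|]. simpl. assert (0 <= Rsum n (fun i => re (v i) * re (v i) + im (v i) * im (v i)))
      by (apply Rsum_nonneg; intros; apply Cnorm_nonneg).
    destruct (Nat.eq_dec i n) as [->|]. lra. assert (i < n)%nat by lia.
    pose proof (Cnorm_nonneg (v n)). specialize (IHn H0). lra. }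
  split; rewrite <- sqrt_Rsqr_abs; apply sqrt_le_1_alt; unfold Rsqr; nra.
Qed.

Definition vscale (c : C) (u : Vec) : Vec := fun i => Cmul c (u i).
Lemma quad_vscale n A c u : quad n A (vscale c u) = Cmul (Cmul (Cconj c) c) (quad n A u).
Proof. unfold quad, vscale. rewrite <- Csum_mul_l. apply Csum_ext; intros. rewrite <- Csum_mul_l.
  apply Csum_ext; intros. rewrite Cconj_mul; ring. Qed.
Lemma nrm_vscale n r u : nrm n (vscale (RtoC r) u) = r * r * nrm n u.
Proof. unfold nrm, ip, vscale. rewrite !re_Csum, <- Rsum_scal. apply Rsum_ext; intros.
  destruct (u i); simpl; ring. Qed.
Lemma quad_zero n A v : (forall i, (i < n)%nat -> v i = C0) -> quad n A v = C0.
Proof. intros H. unfold quad. apply Csum_0'; intros i Hi. apply Csum_0'; intros j Hj. rewrite H by auto. rewrite Cconj_0; ring. Qed.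

Lemma le_from_unit d A l : (forall v, nrm d v = 1 -> re (quad d A v) <= l) -> Le d A l.
Proof.
  intros H u. pose proof (nrm_nonneg d u) as Ha. destruct (Req_dec (nrm d u) 0) as [H0|H0].
  - rewrite quad_zero by (apply nrm_zero; auto). rewrite H0. simpl; lra.
  - set (a := nrm d u) in *. set (r := / sqrt a).
    assert (Hs : 0 < sqrt a) by (apply sqrt_lt_R0; lra).
    assert (Hr : r * r * a = 1). { unfold r. rewrite <- Rinv_mult, sqrt_sqrt by lra. field; lra. }
    specialize (H (vscale (RtoC r) u)). rewrite nrm_vscale, quad_vscale in H. fold a in H. specialize (H Hr).
    replace (re (Cmul (Cmul (Cconj (RtoC r)) (RtoC r)) (quad d A u))) with (r * r * re (quad d A u)) in H
      by (simpl; ring).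
    assert (Hrr : 0 < r * r) by (unfold r; apply Rmult_lt_0_compat; apply Rinv_0_lt_compat; lra).
    apply (Rmult_le_compat_l a) in H; [|lra]. replace (a * (r * r * re (quad d A u))) with (r * r * a * re (quad d A u)) in H by ring.
    rewrite Hr in H. lra.
Qed.

Lemma nrm_pos_of n u i : (i < n)%nat -> u i <> C0 -> 0 < nrm n u.
Proof. intros Hi Hu. destruct (Rle_lt_or_eq_dec 0 (nrm n u) (nrm_nonneg n u)); auto.
  exfalso. apply Hu. apply (nrm_zero n u); auto. Qed.

Lemma eig_le d A l m : Le d A l -> IsEig d A m -> m <= l.
Proof.
  intros HL [u [[i [Hi Hu]] He]]. pose proof (nrm_pos_of d u i Hi Hu) as Hp.
  specialize (HL u). rewrite quad_ip in HL.
  rewrite (ip_ext d u u (mv d A u) (fun i => Cmul (RtoC m) (u i))) in HL by (auto; intros; apply He; auto).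
  unfold ip in HL. rewrite (Csum_ext d _ (fun i => Cmul (RtoC m) (Cmul (Cconj (u i)) (u i)))) in HL by (intros; ring).
  rewrite Csum_mul_l in HL. fold (ip d u u) in HL. rewrite ip_self in HL. simpl in HL.
  apply (Rmult_le_reg_r (nrm d u)); auto. lra.
Qed.

Lemma lambdamax_unique d A l1 l2 : LambdaMax d A l1 -> LambdaMax d A l2 -> l1 = l2.
Proof. intros [E1 M1] [E2 M2]. apply Rle_antisym; auto. Qed.

Lemma mv_lin2 n A B a b v i : mv n (fun i j => Cadd (Cmul a (A i j)) (Cmul b (B i j))) v i =
  Cadd (Cmul a (mv n A v i)) (Cmul b (mv n B v i)).
Proof. unfold mv. rewrite <- !Csum_mul_l, <- Csum_add. apply Csum_ext; intros; ring. Qed.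
Lemma nrm_ev n i : (i < n)%nat -> nrm n (ev i C1) = 1.
Proof. intros Hi. unfold nrm. rewrite ip_ev_l by auto. unfold ev. rewrite Nat.eqb_refl. simpl. ring. Qed.
Lemma re_Rsum_trace d A : re (trace d A) = Rsum d (fun i => re (A i i)).
Proof. unfold trace. apply re_Csum. Qed.

Lemma spectral d sg : (1 <= d)%nat -> Density d sg ->
  exists l, LambdaMax d sg l /\ Le d sg l /\ / INR d <= l <= 1.
Proof.
  intros Hd [Hsup [[HH HP] Htr]].
  assert (HPw : PSDw d sg) by (intros v; apply HP).
  assert (HL1 : Le d sg 1).
  { pose proof (le_trace d sg HH HPw) as H. rewrite Htr in H. exact H. }
  set (Q := fun v => re (quad d sg v)).
  set (E := fun x => exists v, nrm d v = 1 /\ x = Q v).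
  assert (HE1 : forall x, E x -> x <= 1).
  { intros x [v [Hv ->]]. unfold Q. specialize (HL1 v). rewrite Hv in HL1. lra. }
  destruct (completeness E) as [lam [Hub Hlub]].
  { exists 1. intros x Hx; apply HE1; auto. }
  { exists (Q (ev O C1)). exists (ev O C1). split; auto. apply nrm_ev; lia. }
  assert (Hex : forall n : nat, exists v, nrm d v = 1 /\ lam - / (INR n + 1) < Q v).
  { intros n. apply NNPP. intros Hno.
    assert (Hpos : 0 < / (INR n + 1)) by (apply Rinv_0_lt_compat; pose proof (pos_INR n); lra).
    assert (Hb : is_upper_bound E (lam - / (INR n + 1))).
    { intros x [v [Hv ->]]. apply Rnot_lt_le. intros Hlt. apply Hno. exists v; auto. }
    specialize (Hlub _ Hb). lra. }
  set (vs := fun n => epsilon (inhabits (fun _ : nat => C0)) (fun v => nrm d v = 1 /\ lam - / (INR n + 1) < Q v)).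
  assert (Hvs : forall n, nrm d (vs n) = 1 /\ lam - / (INR n + 1) < Q (vs n)).
  { intros n. unfold vs. apply epsilon_spec. apply Hex. }
  destruct (vec_compact d vs 1 Hd) as [phi [w [Hphi Hw]]].
  { intros n i Hi. pose proof (coord_bound d (vs n) i Hi) as Hb. rewrite (proj1 (Hvs n)), sqrt_1 in Hb. auto. }
  assert (Hnw : nrm d w = 1).
  { apply (UL_sequence (fun n => nrm d (vs (phi n)))). apply (Cconv_nrm d (fun n => vs (phi n))); auto.
    apply (cv_ext (fun _ => 1)). intros; symmetry; apply Hvs. apply cv_const. }
  assert (HQw : Q w = lam).
  { apply (UL_sequence (fun n => Q (vs (phi n)))).
    - apply (Cconv_quad d (fun _ => sg) sg (fun n => vs (phi n)) w); auto. intros; apply Cconv_const.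
    - intros e He. destruct (inv_small e He) as [N HN]. exists N. intros n Hn. unfold Rdist.
      assert (HQl : Q (vs (phi n)) <= lam) by (apply Hub; exists (vs (phi n)); split; auto; apply Hvs).
      destruct (Hvs (phi n)) as [_ Hl].
      assert (Hinv : / (INR (phi n) + 1) <= / (INR n + 1)).
      { apply Rinv_le_contravar. pose proof (pos_INR n); lra. apply Rplus_le_compat_r, le_INR, incr_ge; auto. }
      specialize (HN n Hn). rewrite Rabs_left1 by lra. lra. }
  assert (HL : Le d sg lam).
  { apply le_from_unit. intros v Hv. apply Hub. exists v; auto. }
  exists lam. split; [|split; auto; split].
  - set (B := fun i j => Cadd (Cmul (RtoC lam) (Idm d i j)) (Cmul (RtoC (-1)) (sg i j))).
    assert (HBH : Hermitian d B).
    { intros i j Hi Hj. unfold B. rewrite Cconj_add, !Cconj_mul, !Cconj_R, (Idm_herm d i j), (HH i j) by auto. auto. }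
    assert (HBq : forall v, re (quad d B v) = lam * nrm d v - Q v).
    { intros v. unfold B, Q. rewrite quad_lin, quad_Idm. simpl. ring. }
    assert (HBP : PSDw d B). { intros v. rewrite HBq. specialize (HL v). unfold Q. lra. }
    assert (Hk : forall i, (i < d)%nat -> mv d B w i = C0).
    { apply psd_kernel; auto. rewrite HBq, Hnw, HQw. ring. }
    split.
    + assert (Hnz : exists i, (i < d)%nat /\ w i <> C0).
      { apply NNPP. intros Hno. assert (Hz : forall i, (i < d)%nat -> w i = C0).
        { intros i Hi. apply NNPP. intros Hne. apply Hno. exists i; auto. }
        rewrite nrm_sum, (Rsum_ext d _ (fun _ => 0)), Rsum_0 in Hnw. lra.
        intros i Hi. rewrite Hz by auto. simpl. ring. }
      exists w. split; auto. intros i Hi. specialize (Hk i Hi). unfold B in Hk.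
      rewrite mv_lin2, mv_Idm in Hk by auto.
      change (Csum d (fun j => Cmul (sg i j) (w j))) with (mv d sg w i).
      destruct (mv d sg w i) as [p q], (w i) as [p' q']. injection Hk; intros E1 E2.
      apply C_ext; simpl in *; lra.
    + intros m Hm. apply (eig_le d sg); auto.
  - assert (H1 : 1 <= INR d * lam).
    { assert (Ht : re (trace d sg) = 1) by (rewrite Htr; auto).
      rewrite re_Rsum_trace in Ht. rewrite <- Ht. rewrite Rmult_comm, <- (Rmult_1_r (lam * INR d)).
      replace (lam * INR d * 1) with (Rsum d (fun _ => lam)).
      - apply Rsum_le. intros i Hi. specialize (HL (ev i C1)). rewrite quad_ev, nrm_ev in HL by auto.
        replace (re (Cmul (Cconj C1) (Cmul (sg i i) C1))) with (re (sg i i)) in HL by (simpl; ring). lra.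
      - clear. induction d; simpl. ring. rewrite IHd. destruct d; simpl; ring. }
    assert (0 < INR d) by (apply lt_0_INR; lia).
    apply (Rmult_le_reg_l (INR d)); auto. rewrite Rinv_r by lra. lra.
  - specialize (HL1 w). rewrite Hnw in HL1. fold (Q w) in HL1. lra.
Qed.

Lemma Rsum_single_le n f i : (forall k, (k < n)%nat -> 0 <= f k) -> (i < n)%nat -> f i <= Rsum n f.
Proof.
  induction n; intros H Hi; [lia|]. simpl. assert (0 <= Rsum n f) by (apply Rsum_nonneg; intros; apply H; lia).
  destruct (Nat.eq_dec i n) as [->|]. lra. assert (f i <= Rsum n f) by (apply IHn; [intros; apply H|]; lia).
  pose proof (H n ltac:(lia)). lra.
Qed.

Lemma dens_diag d sg i : Density d sg -> (i < d)%nat -> 0 <= re (sg i i) <= 1.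
Proof.
  intros [Hsup [[HH HP] Htr]] Hi. assert (HPw : PSDw d sg) by (intros v; apply HP).
  split. apply (psd_diag d); auto.
  assert (Ht : re (trace d sg) = 1) by (rewrite Htr; auto). rewrite re_Rsum_trace in Ht. rewrite <- Ht.
  apply (Rsum_single_le d (fun i => re (sg i i))); auto. intros; apply (psd_diag d); auto.
Qed.

Lemma dens_entry_bound d sg i j : Density d sg -> (i < d)%nat -> (j < d)%nat ->
  Rabs (re (sg i j)) <= 1 /\ Rabs (im (sg i j)) <= 1.
Proof.
  intros Hs Hi Hj. pose proof (dens_diag d sg i Hs Hi) as Di. pose proof (dens_diag d sg j Hs Hj) as Dj.
  destruct Hs as [Hsup [[HH HP] Htr]].
  assert (Hii : im (sg i i) = 0) by (apply (herm_diag_real d); auto).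
  destruct (Nat.eq_dec i j) as [<-|Hne].
  - rewrite Hii, Rabs_R0. split; [|lra]. apply Rabs_le; lra.
  - assert (Hji : sg j i = Cconj (sg i j)) by (apply HH; auto).
    assert (Hjj : im (sg j j) = 0) by (apply (herm_diag_real d); auto).
    assert (Q := fun y => proj2 (HP (two i C1 j y))).
    pose proof (Q C1) as Q1. pose proof (Q (mkC (-1) 0)) as Q2. pose proof (Q (mkC 0 1)) as Q3. pose proof (Q (mkC 0 (-1))) as Q4.
    rewrite quad_two in Q1, Q2, Q3, Q4 by auto. rewrite Hji in Q1, Q2, Q3, Q4.
    destruct (sg i i) as [a1 b1], (sg j j) as [a2 b2], (sg i j) as [p q]. simpl in *.
    split; apply Rabs_le; nra.
Qed.

Lemma cv_Rsum m (f : nat -> nat -> R) (g : nat -> R) : (forall i, (i < m)%nat -> Un_cv (fun n => f n i) (g i)) ->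
  Un_cv (fun n => Rsum m (f n)) (Rsum m g).
Proof. induction m; intros H; simpl. apply cv_const.
  apply (CV_plus (fun n => Rsum m (f n)) (fun n => f n m)). apply IHm; intros; apply H; lia. apply H; lia. Qed.

Lemma cv_abs0 u : Un_cv u 0 -> Un_cv (fun n => Rabs (u n)) 0.
Proof. intros H e He. destruct (H e He) as [N HN]. exists N. intros n Hn. specialize (HN n Hn).
  unfold Rdist in *. rewrite Rminus_0_r in *. rewrite Rabs_Rabsolu. auto. Qed.

Lemma Cmod_le z : Cmod z <= Rabs (re z) + Rabs (im z).
Proof.
  unfold Cmod. rewrite <- (sqrt_Rsqr (Rabs (re z) + Rabs (im z))).
  - apply sqrt_le_1_alt. unfold Rsqr. pose proof (Rabs_pos (re z)). pose proof (Rabs_pos (im z)).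
    assert (Ha : Rabs (re z) * Rabs (re z) = re z * re z) by (rewrite <- Rabs_mult; apply Rabs_right; nra).
    assert (Hb : Rabs (im z) * Rabs (im z) = im z * im z) by (rewrite <- Rabs_mult; apply Rabs_right; nra).
    nra.
  - pose proof (Rabs_pos (re z)). pose proof (Rabs_pos (im z)). lra.
Qed.
Lemma Cmod_nonneg z : 0 <= Cmod z.
Proof. apply sqrt_pos. Qed.
Lemma Cmod_0 : Cmod (Csub C0 C0) = 0.
Proof. unfold Cmod. simpl. replace ((0 + - 0) * (0 + - 0) + (0 + - 0) * (0 + - 0)) with 0 by ring. apply sqrt_0. Qed.
Lemma mdist_self d x : mdist d x x = 0.
Proof. unfold mdist. rewrite (Rsum_ext d _ (fun _ => 0)). apply Rsum_0. intros i _.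
  rewrite (Rsum_ext d _ (fun _ => 0)). apply Rsum_0. intros j _.
  unfold Cmod. replace (re (Csub (x i j) (x i j)) * re (Csub (x i j) (x i j)) + im (Csub (x i j) (x i j)) * im (Csub (x i j) (x i j))) with 0
    by (simpl; ring). apply sqrt_0. Qed.

Lemma Cconv_unique z w1 w2 : Cconv z w1 -> Cconv z w2 -> w1 = w2.
Proof. intros [a b] [c e]. apply C_ext; eapply UL_sequence; eauto. Qed.
Lemma Cconv_ext z1 z2 w : (forall n, z1 n = z2 n) -> Cconv z1 w -> Cconv z2 w.
Proof. intros H [a b]; split; eapply cv_ext; eauto; intros; simpl; rewrite H; auto. Qed.

Lemma ball_limit d D eps rho (sgs : nat -> Mat) (ls : nat -> R) l :
  (1 <= d)%nat -> ContinuousOn d D -> Density d rho ->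
  (forall n, Ball d D eps rho (sgs n) /\ Le d (sgs n) (ls n)) -> Un_cv ls l ->
  exists sg, Ball d D eps rho sg /\ Le d sg l.
Proof.
  intros Hd HDc Hrho Hs Hl.
  destruct (mat_compact d sgs 1) as [phi [Ai [Hphi Hc]]].
  { intros n i j Hi Hj. apply (dens_entry_bound d); auto. apply (Hs n). }
  set (S := fun i j => if (Nat.ltb i d && Nat.ltb j d)%bool then Ai i j else C0).
  assert (HcS : forall i j, (i < d)%nat -> (j < d)%nat -> Cconv (fun n => sgs (phi n) i j) (S i j)).
  { intros i j Hi Hj. unfold S. apply Nat.ltb_lt in Hi as Hi'. apply Nat.ltb_lt in Hj as Hj'. rewrite Hi', Hj'. auto. }
  assert (Hden : forall n, Density d (sgs n)) by (intros; apply Hs).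
  assert (HqS : forall v, Cconv (fun n => quad d (sgs (phi n)) v) (quad d S v)).
  { intros v. apply (Cconv_quad d (fun n => sgs (phi n)) S (fun _ => v) v); auto. intros; apply Cconv_const. }
  assert (HSd : Density d S).
  { split; [|split; [split|]].
    - intros i j Hij. unfold S. destruct Hij as [H|H]; apply Nat.ltb_ge in H; rewrite H; [|rewrite Bool.andb_false_r]; auto.
    - intros i j Hi Hj. apply (Cconv_unique (fun n => sgs (phi n) i j)); auto.
      apply (Cconv_ext (fun n => Cconj (sgs (phi n) j i))). intros n. symmetry. apply (Hden (phi n)); auto.
      apply Cconv_conj; auto.
    - intros v. destruct (HqS v) as [Hre Him]. split.
      + apply (UL_sequence (fun n => im (quad d (sgs (phi n)) v))); auto.
        apply (cv_ext (fun _ => 0)); [|apply cv_const]. intros n. symmetry. apply (Hden (phi n)).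
      + apply (Rle_cv_lim (Un := fun _ => 0) (Vn := fun n => re (quad d (sgs (phi n)) v))); auto; [|apply cv_const].
        intros n. apply (Hden (phi n)).
    - apply (Cconv_unique (fun n => trace d (sgs (phi n)))).
      + unfold trace. apply (Cconv_Csum d (fun n i => sgs (phi n) i i)). intros; apply HcS; auto.
      + apply (Cconv_ext (fun _ => C1)). intros n; symmetry; apply (Hden (phi n)). apply Cconv_const. }
  exists S. split; [split; auto|].
  -
    assert (Hmd : Un_cv (fun n => Rsum d (fun i => Rsum d (fun j =>
        Rabs (re (Csub (S i j) (sgs (phi n) i j))) + Rabs (im (Csub (S i j) (sgs (phi n) i j)))))) 0).
    { replace 0 with (Rsum d (fun i => Rsum d (fun j => 0 + 0))).
      2:{ rewrite (Rsum_ext d _ (fun _ => 0)). apply Rsum_0. intros; rewrite (Rsum_ext d _ (fun _ => 0)). apply Rsum_0. intros; ring. }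
      apply (cv_Rsum d (fun n i => Rsum d (fun j => Rabs (re (Csub (S i j) (sgs (phi n) i j))) + Rabs (im (Csub (S i j) (sgs (phi n) i j)))))).
      intros i Hi. apply (cv_Rsum d (fun n j => Rabs (re (Csub (S i j) (sgs (phi n) i j))) + Rabs (im (Csub (S i j) (sgs (phi n) i j))))).
      intros j Hj. destruct (HcS i j Hi Hj) as [Hr Him].
      apply (CV_plus (fun n => Rabs (re (Csub (S i j) (sgs (phi n) i j)))) (fun n => Rabs (im (Csub (S i j) (sgs (phi n) i j))))).
      - apply cv_abs0. simpl. apply (cv_ext (fun n => re (S i j) - re (sgs (phi n) i j))); [intros; ring|].
        replace 0 with (re (S i j) - re (S i j)) by ring. apply CV_minus; auto. apply cv_const.
      - apply cv_abs0. simpl. apply (cv_ext (fun n => im (S i j) - im (sgs (phi n) i j))); [intros; ring|].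
        replace 0 with (im (S i j) - im (S i j)) by ring. apply CV_minus; auto. apply cv_const. }
    apply Rnot_lt_le. intros Hgt. set (e := D S rho - eps).
    assert (He : 0 < e) by (unfold e; lra).
    destruct (HDc S rho HSd Hrho e He) as [delta [Hdelta Hcont]].
    destruct (Hmd delta Hdelta) as [N HN]. specialize (HN N (Nat.le_refl N)). unfold Rdist in HN. rewrite Rminus_0_r in HN.
    assert (Hmdist : mdist d S (sgs (phi N)) < delta).
    { eapply Rle_lt_trans; [|eapply Rle_lt_trans; [apply Rle_abs|exact HN]].
      unfold mdist. apply Rsum_le; intros i _. apply Rsum_le; intros j _. apply Cmod_le. }
    specialize (Hcont (sgs (phi N)) rho (Hden (phi N)) Hrho Hmdist ltac:(rewrite mdist_self; auto)).
    destruct (Hs (phi N)) as [[_ HB] _]. apply Rabs_def2 in Hcont. unfold e in Hcont. lra.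
  - intros v. apply (Rle_cv_lim (Un := fun n => re (quad d (sgs (phi n)) v)) (Vn := fun n => ls (phi n) * nrm d v)).
    + intros n. apply (Hs (phi n)).
    + apply HqS.
    + apply (CV_mult (fun n => ls (phi n)) (fun _ => nrm d v)). apply cv_sub; auto. apply cv_const.
Qed.

Lemma ln2_pos : 0 < ln 2.
Proof. rewrite <- ln_1. apply ln_increasing; lra. Qed.
Lemma log2_lt x y : 0 < x -> x < y -> log2 x < log2 y.
Proof. intros. unfold log2. apply Rmult_lt_compat_r. apply Rinv_0_lt_compat, ln2_pos. apply ln_increasing; auto. Qed.
Lemma log2_le x y : 0 < x -> x <= y -> log2 x <= log2 y.
Proof. intros Hx [H|H]. left; apply log2_lt; auto. subst; lra. Qed.
Lemma log2_lt_inv x y : 0 < x -> 0 < y -> log2 x < log2 y -> x < y.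
Proof. intros Hx Hy H. destruct (Rlt_or_le x y) as [|Hle]; auto. apply log2_le in Hle; auto. lra. Qed.
Lemma Rpower2_log2 x : 0 < x -> Rpower 2 (log2 x) = x.
Proof. intros Hx. unfold Rpower, log2. pose proof ln2_pos. replace (ln x / ln 2 * ln 2) with (ln x) by (field; lra). apply exp_ln; auto. Qed.
Lemma Rpower2_mlog2 l : 0 < l -> Rpower 2 (- log2 l) = / l.
Proof. intros Hl. unfold Rpower, log2. pose proof ln2_pos. replace (- (ln l / ln 2) * ln 2) with (- ln l) by (field; lra).
  rewrite exp_Ropp, exp_ln; auto. Qed.
Lemma log2_Rpower2 h : log2 (Rpower 2 h) = h.
Proof. unfold log2. rewrite ln_Rpower. pose proof ln2_pos. field; lra. Qed.
Lemma Rpower2_lt x y : x < y -> Rpower 2 x < Rpower 2 y.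
Proof. intros; apply Rpower_lt; lra. Qed.
Lemma Rpower2_le x y : x <= y -> Rpower 2 x <= Rpower 2 y.
Proof. intros; apply Rle_Rpower; lra. Qed.
Lemma Rpower2_pos x : 0 < Rpower 2 x.
Proof. unfold Rpower. apply exp_pos. Qed.

Lemma floor_nat x : 1 <= x -> exists m : nat, floorR x = INR m /\ INR m <= x < INR m + 1 /\ (1 <= m)%nat.
Proof.
  intros Hx. destruct (base_Int_part x) as [H1 H2]. set (z := Int_part x) in *.
  assert (Hz : (0 <= z)%Z). { apply le_IZR. lra. }
  exists (Z.to_nat z). rewrite INR_IZR_INZ, Z2Nat.id by auto. unfold floorR. fold z.
  split; auto. split. lra.
  assert (Hz1 : (1 <= z)%Z). { apply le_IZR. assert (IZR z > 0) by lra. assert (0 < z)%Z by (apply lt_IZR; lra). apply IZR_le. lia. }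
  lia.
Qed.

Lemma floor_eq x m : INR m <= x < INR m + 1 -> floorR x = INR m.
Proof.
  intros [H1 H2]. assert (Hx : 0 <= x) by (pose proof (pos_INR m); lra).
  destruct (Rle_lt_dec 1 x) as [Hx1|Hx1].
  - destruct (floor_nat x Hx1) as [m' [E [[H3 H4] _]]]. rewrite E. f_equal.
    assert (m' < m + 1)%nat. { apply INR_lt. rewrite plus_INR. simpl. lra. }
    assert (m < m' + 1)%nat. { apply INR_lt. rewrite plus_INR. simpl. lra. }
    lia.
  - assert (m = 0)%nat. { destruct m; auto. rewrite S_INR in H1. pose proof (pos_INR m). lra. }
    subst m. simpl. unfold floorR. destruct (base_Int_part x) as [H3 H4].
    assert (Int_part x = 0)%Z.
    { assert (IZR (Int_part x) < 1) by lra. assert (IZR (Int_part x) > -1) by lra.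
      apply lt_IZR in H. apply lt_IZR in H0. lia. }
    rewrite H; auto.
Qed.

Lemma max_exists (P : nat -> Prop) d : (exists k, P k) -> (forall k, P k -> (k <= d)%nat) ->
  exists k, P k /\ forall k', P k' -> (k' <= k)%nat.
Proof.
  induction d; intros [k0 Hk0] Hb.
  - exists k0. split; auto. intros k' Hk'. pose proof (Hb k' Hk'). pose proof (Hb k0 Hk0). lia.
  - destruct (classic (P (S d))) as [HS|HS].
    + exists (S d). split; auto.
    + apply IHd. exists k0; auto. intros k Hk. specialize (Hb k Hk). destruct (Nat.eq_dec k (S d)); [subst; contradiction|lia].
Qed.

Lemma Le_mono d A l l' : Le d A l -> l <= l' -> Le d A l'.
Proof. intros H Hl v. specialize (H v). pose proof (nrm_nonneg d v). nra. Qed.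

Lemma PiK_density d : (1 <= d)%nat -> Density d (PiK d).
Proof.
  intros Hd. assert (Hd0 : 0 < INR d) by (apply lt_0_INR; lia).
  assert (HE : forall i j, (i < d)%nat -> (j < d)%nat -> PiK d i j = Dg (fun _ => / INR d) i j).
  { intros i j Hi Hj. unfold PiK, Dg. apply Nat.ltb_lt in Hi. rewrite Hi. simpl. auto. }
  split; [|split; [split|]].
  - intros i j [H|H]; unfold PiK; [apply Nat.ltb_ge in H; rewrite H; auto|].
    destruct (Nat.ltb_spec i d); simpl; auto. destruct (Nat.eqb_spec i j); auto. lia.
  - intros i j Hi Hj. rewrite !HE by auto. unfold Dg. rewrite Nat.eqb_sym. destruct (Nat.eqb j i); rewrite ?Cconj_R, ?Cconj_0; auto.
  - intros v. rewrite (quad_ext_m d _ (Dg (fun _ => / INR d))) by auto. rewrite quad_Dg, re_Csum, im_Csum. split.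
    + rewrite <- (Rsum_0 d). apply Rsum_ext; intros. destruct (v i); simpl; ring.
    + apply Rsum_nonneg; intros i _. assert (0 < / INR d) by (apply Rinv_0_lt_compat; auto). destruct (v i); simpl; nra.
  - unfold trace. rewrite (Csum_ext d _ (fun _ => RtoC (/ INR d))).
    + rewrite Csum_const. apply C_ext; simpl; field; lra.
    + intros i Hi. rewrite HE by auto. unfold Dg. rewrite Nat.eqb_refl. auto.
Qed.

Lemma Hmin_value d sg h : (1 <= d)%nat -> Density d sg -> Hmin d sg h ->
  exists l, LambdaMax d sg l /\ Le d sg l /\ / INR d <= l <= 1 /\ h = - log2 l.
Proof.
  intros Hd Hs [l' [HL' Hh]]. destruct (spectral d sg Hd Hs) as [l [HL [HLe Hb]]].
  assert (l = l') by (eapply lambdamax_unique; eauto). subst l'. exists l; auto.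
Qed.

Theorem mainTheorem18 (d : nat) (hd : (1 <= d)%nat)
  (D : Mat -> Mat -> R) (HDm : IsMetricOn d D) (HDc : ContinuousOn d D)
  (rho : Mat) (Hrho : Density d rho) (eps : R) (Heps : 0 <= eps <= 1) :
  exists cost s heps,
    IsCost d (Ball d D eps rho) cost /\
    IsSup (fun x => exists sigma h, Ball d D eps rho sigma /\ Hmin d sigma h /\
                                    x = log2 (floorR (Rpower 2 h))) s /\
    IsSup (fun h => exists sigma, Ball d D eps rho sigma /\ Hmin d sigma h) heps /\
    cost = log2 (INR d) - s /\
    cost = log2 (INR d) - log2 (floorR (Rpower 2 heps)).
Proof.
  set (B := Ball d D eps rho).
  assert (HdR : 0 < INR d) by (apply lt_0_INR; lia).
  set (ach := fun k => (1 <= k <= d)%nat /\ Conv d (coinSet d (CoinK k)) B).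
  assert (F1a : forall k, ach k -> exists sg, B sg /\ Le d sg (/ INR k)).
  { intros k [Hk [S [HS HSB]]]. exists (applyS d S (PiK k)). split.
    - apply HSB; simpl; auto.
    - apply (necessity d k S); auto; lia. }
  assert (F1b : forall k sg, (1 <= k <= d)%nat -> B sg -> Le d sg (/ INR k) -> ach k).
  { intros k sg Hk HB HL. destruct (construct d k sg Hk (proj1 HB) HL) as [S [HS Hap]].
    split; auto. exists S. split; auto. intros r0 Hr0. simpl in Hr0. subst r0. rewrite Hap. auto. }
  assert (HrB : B rho).
  { split; auto. destruct (HDm rho rho rho Hrho Hrho Hrho) as [_ [[_ H] _]]. rewrite (H eq_refl). lra. }
  assert (Hach1 : ach 1%nat).
  { destruct (spectral d rho hd Hrho) as [l [_ [HL [_ Hl1]]]]. apply (F1b 1%nat rho); auto.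
    simpl (INR 1). rewrite Rinv_1. apply Le_mono with l; auto. }
  destruct (max_exists ach d) as [ks [Hks Hmax]].
  { exists 1%nat; auto. }
  { intros k [Hk _]; lia. }
  assert (Hks1 : (1 <= ks <= d)%nat) by apply Hks.
  assert (HksR : 0 < INR ks) by (apply lt_0_INR; lia).
  assert (Key : forall sg h, B sg -> Hmin d sg h -> exists m, floorR (Rpower 2 h) = INR m /\ (1 <= m <= ks)%nat /\
                  INR m <= Rpower 2 h < INR m + 1 /\ Rpower 2 h <= INR d).
  { intros sg h HB Hh. destruct (Hmin_value d sg h hd (proj1 HB) Hh) as [l [HLM [HLe [Hlb ->]]]].
    assert (Hdi : 0 < / INR d) by (apply Rinv_0_lt_compat; auto).
    assert (Hl0 : 0 < l) by lra.
    rewrite Rpower2_mlog2 by auto.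
    assert (Hinv1 : 1 <= / l). { rewrite <- Rinv_1. apply Rinv_le_contravar; lra. }
    assert (Hinvd : / l <= INR d). { rewrite <- (Rinv_inv (INR d)). apply Rinv_le_contravar; lra. }
    destruct (floor_nat (/ l) Hinv1) as [m [Hm [[Hm1 Hm2] Hm3]]]. exists m. split; auto.
    assert (HmR : 0 < INR m) by (apply lt_0_INR; lia).
    split; [split; auto|auto].
    apply Hmax. apply (F1b m sg); auto.
    - split; auto. apply INR_le. lra.
    - apply Le_mono with l; auto. rewrite <- (Rinv_inv l). apply Rinv_le_contravar; auto. }
  destruct (F1a ks Hks) as [sgs [HBs HLs]].
  destruct (spectral d sgs hd (proj1 HBs)) as [ls [HLMs [HLes Hbs]]].
  assert (Hls : ls <= / INR ks) by (apply (eig_le d sgs); auto; apply HLMs).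
  assert (Hls0 : 0 < ls) by (assert (0 < / INR d) by (apply Rinv_0_lt_compat; auto); lra).
  set (hs := - log2 ls).
  assert (Hhs : Hmin d sgs hs) by (exists ls; split; auto).
  assert (Hphs : INR ks <= Rpower 2 hs).
  { unfold hs. rewrite Rpower2_mlog2 by auto. rewrite <- (Rinv_inv (INR ks)). apply Rinv_le_contravar; auto. }
  assert (Hfs : floorR (Rpower 2 hs) = INR ks).
  { destruct (Key sgs hs HBs Hhs) as [m [Hm [Hm1 [[Hm2 Hm3] _]]]]. rewrite Hm. f_equal.
    assert (ks < m + 1)%nat. { apply INR_lt. rewrite plus_INR. simpl. lra. } lia. }
  set (HS := fun h => exists sg, B sg /\ Hmin d sg h).
  assert (HSub : forall h, HS h -> h <= log2 (INR d)).
  { intros h [sg [HB Hh]]. destruct (Key sg h HB Hh) as [_ [_ [_ [_ Hd']]]].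
    rewrite <- (log2_Rpower2 h). apply log2_le; auto. apply Rpower2_pos. }
  destruct (completeness HS) as [heps [Hub Hlub]].
  { exists (log2 (INR d)). intros x Hx; apply HSub; auto. }
  { exists hs. exists sgs; auto. }
  assert (Hfe : floorR (Rpower 2 heps) = INR ks).
  { apply floor_eq. split.
    - apply Rle_trans with (Rpower 2 hs); auto. apply Rpower2_le. apply Hub. exists sgs; auto.
    - apply Rnot_le_lt. intros Hge.
      assert (Hhd : heps <= log2 (INR d)) by (apply Hlub; intros x Hx; apply HSub; auto).
      assert (Hpd : Rpower 2 heps <= INR d).
      { rewrite <- (Rpower2_log2 (INR d)) by auto. apply Rpower2_le; auto. }
      assert (Hksd : (ks + 1 <= d)%nat). { apply INR_le. rewrite plus_INR. simpl. lra. }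
      assert (Hk1R : INR (ks + 1) = INR ks + 1) by (rewrite plus_INR; simpl; ring).
      set (c := / INR (ks + 1)).
      assert (Hc : 0 < c) by (unfold c; apply Rinv_0_lt_compat; lra).
      set (t := fun n : nat => (1 + / (INR n + 1)) * c).
      assert (Hex : forall n, exists sg, B sg /\ Le d sg (t n)).
      { intros n.
        assert (Hn0 : 0 < / (INR n + 1)) by (apply Rinv_0_lt_compat; pose proof (pos_INR n); lra).
        assert (Ht : c < t n) by (unfold t; nra).
        assert (Ht0 : 0 < t n) by lra.
        assert (Hlt : - log2 (t n) < heps).
        { apply Rnot_le_lt. intros Hle. apply Rpower2_le in Hle. rewrite Rpower2_mlog2 in Hle by auto.
          assert (/ t n < / c) by (apply Rinv_lt_contravar; nra).
          unfold c in H. rewrite Rinv_inv in H. lra. }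
        apply NNPP. intros Hno.
        assert (Hbd : is_upper_bound HS (- log2 (t n))).
        { intros h [sg [HB Hh]]. apply Rnot_lt_le. intros Hgt. apply Hno. exists sg. split; auto.
          destruct (Hmin_value d sg h hd (proj1 HB) Hh) as [l [_ [HLe [Hlb ->]]]].
          assert (Hl0 : 0 < l) by (assert (0 < / INR d) by (apply Rinv_0_lt_compat; auto); lra).
          apply Rpower2_lt in Hgt. rewrite !Rpower2_mlog2 in Hgt by auto.
          apply Le_mono with l; auto. left.
          apply Rinv_lt_contravar in Hgt; [|apply Rmult_lt_0_compat; apply Rinv_0_lt_compat; auto].
          rewrite !Rinv_inv in Hgt. auto. }
        specialize (Hlub _ Hbd). lra. }
      set (sq := fun n => epsilon (inhabits (fun _ _ : nat => C0)) (fun sg => B sg /\ Le d sg (t n))).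
      assert (Hsq : forall n, B (sq n) /\ Le d (sq n) (t n)) by (intros n; unfold sq; apply epsilon_spec; apply Hex).
      assert (Htc : Un_cv t c).
      { replace c with ((1 + 0) * c) at 1 by ring. apply (CV_mult (fun n => 1 + / (INR n + 1)) (fun _ => c)); [|apply cv_const].
        apply (CV_plus (fun _ => 1) (fun n => / (INR n + 1))). apply cv_const.
        intros e He. destruct (inv_small e He) as [N HN]. exists N. intros n Hn. unfold Rdist. rewrite Rminus_0_r.
        rewrite Rabs_right. apply HN; auto. left; apply Rinv_0_lt_compat; pose proof (pos_INR n); lra. }
      destruct (ball_limit d D eps rho sq t c hd HDc Hrho Hsq Htc) as [sg [HB HL]].
      assert (Ha : ach (ks + 1)%nat) by (apply (F1b (ks + 1)%nat sg); auto; lia).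
      specialize (Hmax _ Ha). lia. }
  exists (log2 (INR d) - log2 (INR ks)), (log2 (INR ks)), heps.
  split; [|split; [|split; [|split]]].
  - split.
    + intros x [c [Hc [Hconv ->]]]. destruct c as [k|].
      * simpl in Hc. assert (Hk : ach k) by (split; auto). specialize (Hmax k Hk).
        simpl. assert (log2 (INR k) <= log2 (INR ks)) by (apply log2_le; [apply lt_0_INR; lia | apply le_INR; auto]). lra.
      * assert (Had : ach d).
        { destruct Hconv as [S [HS' HSB]]. split; [lia|]. exists S. split; auto.
          intros r0 Hr0; simpl in Hr0; subst r0. apply HSB. simpl. apply PiK_density; auto. }
        specialize (Hmax d Had). assert (ks = d) by lia. subst ks. simpl. lra.
    + intros b Hb. apply Hb. exists (CoinK ks). split; [simpl; auto|split; [apply Hks|simpl; auto]].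
  - split.
    + intros x [sg [h [HB [Hh ->]]]]. destruct (Key sg h HB Hh) as [m [Hm [Hm1 _]]]. rewrite Hm.
      apply log2_le. apply lt_0_INR; lia. apply le_INR; lia.
    + intros b Hb. apply Hb. exists sgs, hs. split; auto. split; auto. rewrite Hfs; auto.
  - split; auto.
  - reflexivity.
  - rewrite Hfe. reflexivity.
Qed.
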